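(* Let $C_8$ be the configuration with lines $l_0,\dots,l_7$ and points $p_{012},p_{034},p_{056},p_{07},p_{135},p_{147},p_{16},p_{23},p_{246},p_{257},p_{367},p_{45}$, where $p_{ijk}$ is incident exactly to $l_i,l_j,l_k$ and $p_{ij}$ exactly to $l_i,l_j$. Let $\mathcal{P}_0$ be the set of its points not incident to $l_0$, $\mathcal{A}=\{(i,p)\in\{1,\dots,7\}\times\mathcal{P}_0:p\prec l_i\}$. Let $L=\bigoplus_k L_k$ be the free Lie algebra over $\mathbb{Z}$ on $x_1,\dots,x_7$, $H=L_1$, $S_p=\sum_{j:\,p\prec l_j}x_j$, $R_2\subset L_2$ the subgroup with $\mathbb{Z}$-basis $\bar r(i,p)=[x_i,S_p]$ for $(i,p)\in\mathcal{A}$, $i\ne\min\{j:l_j\succ p\}$, $R_3=[H,R_2]$, $P_3=L_3/R_3$, $A=H^{\mathcal{A}}$, and $\tilde\tau:A\to\mathrm{Hom}(R_2,P_3)$ defined by $\tilde\tau a(\bar r(i,p))=[[x_i,a(i,p)],S_p]+[x_i,\sum_{j:\,p\prec l_j}[x_j,a(j,p)]]+R_3$. Let $U\subseteq A$ be the subgroup generated by $a^{(0)}_{i,p}$ ($(i,p)\in\mathcal{A}$), $a^{(0)}_{i,p}(j,q)=\delta_{i,j}\delta_{p,q}x_i$; $a^{(1)}_{i,p}$ ($1\le i\le7$, $p\in\mathcal{P}_0$), $a^{(1)}_{i,p}(j,q)=\delta_{p,q}x_i$; and $a^{(2)}_{i,p_1,p_2}$ ($1\le i\le 7$, $p_1,p_2\in\mathcal{P}_0$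 incident to $l_i$), $a^{(2)}_{i,p_1,p_2}(j,q)=\delta_{i,j}\delta_{p_1,q}S_{p_2}$. Then $U=\ker\tilde\tau$.
   Context: Incidence of a point $p$ and line $l$ is written $p\prec l$ or $l\succ p$. The elements $\bar r(i,p)$ listed are linearly independent in $L_2$, so $\tilde\tau$ is well defined by its values on them. *)

(* Defs.v *)
From mathcomp Require Import all_boot all_order all_algebra.
Set Implicit Arguments. Unset Strict Implicit. Unset Printing Implicit Defensive.
Import Order.TTheory GRing.Theory Num.Theory.
Local Open Scope ring_scope.

(* Points are 'I_12, in the order
   p012, p034, p056, p07, p135, p147, p16, p23, p246, p257, p367, p45;
   point number n is incident exactly to the lines listed in nth n pts_lines. *)
Definition pts_lines : seq (seq nat) :=
  [:: [:: 0; 1; 2]; [:: 0; 3; 4]; [:: 0; 5; 6]; [:: 0; 7];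
      [:: 1; 3; 5]; [:: 1; 4; 7]; [:: 1; 6];    [:: 2; 3];
      [:: 2; 4; 6]; [:: 2; 5; 7]; [:: 3; 6; 7]; [:: 4; 5]]%N.

Definition line := 'I_8.
Definition point := 'I_12.

Definition inc (p : point) (l : line) : bool := (nat_of_ord l \in nth [::] pts_lines p).

Definition inP0 (p : point) : bool := ~~ inc p ord0.

Definition inA (i : line) (p : point) : bool :=
  [&& (nat_of_ord i != 0)%N, inP0 p & inc p i].

Definition minline (p : point) : nat := \big[minn/8%N]_(j : line | inc p j) nat_of_ord j.

(* The free Lie ring over Z on x_1..x_7 is realised (Magnus/Witt embedding) as
   the Lie subring generated by the letters inside the free associative ring
   Z<X_1..X_7>, with [u,v] = uv - vu.  Elements of the latter are represented
   by their coefficient function on words; generator x_{k+1} is letter k : 'I_7. *)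
Definition word := seq 'I_7.
Definition ncs := word -> int.

Definition ncmul (u v : ncs) : ncs :=
  fun w => \sum_(k < (size w).+1) u (take k w) * v (drop k w).

Definition br (u v : ncs) : ncs := fun w => ncmul u v w - ncmul v u w.

Definition ncadd (u v : ncs) : ncs := fun w => u w + v w.

Definition Hel := 'I_7 -> int.
Definition hv (h : Hel) : ncs := fun w => if w is [:: k] then h k else 0.

Definition gen (k : 'I_7) : ncs := hv (fun j => (j == k)%:R).

Definition xcoef (i : line) : Hel := fun k => (lift ord0 k == i)%:R.
Definition Scoef (p : point) : Hel := fun k => (inc p (lift ord0 k))%:R.

Definition X (i : line) : ncs := hv (xcoef i).
Definition S (p : point) : ncs := hv (Scoef p).

Definition inB (i : line) (p : point) : bool := inA i p && (nat_of_ord i != minline p).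
Definition rbar (i : line) (p : point) : ncs := br (X i) (S p).

Definition inR3 (v : ncs) : Prop :=
  exists c : 'I_7 -> line -> point -> int,
    forall w : word,
      v w = \sum_(k : 'I_7) \sum_(i : line) \sum_(p : point | inB i p)
              c k i p * br (gen k) (rbar i p) w.

(* A = H^A : an element assigns to each (i,p) an element of H
   (only the values at (i,p) in A are relevant) *)
Definition Ael := line -> point -> Hel.

Definition tau_val (a : Ael) (i : line) (p : point) : ncs :=
  ncadd (br (br (X i) (hv (a i p))) (S p))
        (br (X i) (fun w => \sum_(j : line | inc p j) br (X j) (hv (a j p)) w)).

Definition in_ker_tau (a : Ael) : Prop :=
  forall (i : line) (p : point), inB i p -> inR3 (tau_val a i p).

Definition a0 (i : line) (p : point) : Ael :=
  fun j q => fun k => ((j == i) && (q == p))%:R * xcoef i k.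
Definition a1 (i : line) (p : point) : Ael :=
  fun j q => fun k => (q == p)%:R * xcoef i k.
Definition a2 (i : line) (p1 p2 : point) : Ael :=
  fun j q => fun k => ((j == i) && (q == p1))%:R * Scoef p2 k.

Definition inU (a : Ael) : Prop :=
  exists (c0 c1 : line -> point -> int) (c2 : line -> point -> point -> int),
    forall (j : line) (q : point), inA j q -> forall k : 'I_7,
      a j q k =
        \sum_(i : line) \sum_(p : point | inA i p) c0 i p * a0 i p j q k
      + \sum_(i : line | nat_of_ord i != 0%N) \sum_(p : point | inP0 p) c1 i p * a1 i p j q k
      + \sum_(i : line | nat_of_ord i != 0%N)
          \sum_(p1 : point | inP0 p1 && inc p1 i) \sum_(p2 : point | inP0 p2 && inc p2 i)
             c2 i p1 p2 * a2 i p1 p2 j q k.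

(* Main.v *)
Require Import Defs.
From mathcomp Require Import all_boot all_order all_algebra.
From mathcomp Require Import ring.
From Stdlib Require Import FunctionalExtensionality.
Set Implicit Arguments. Unset Strict Implicit. Unset Printing Implicit Defensive.
Import GRing.Theory.
Open Scope ring_scope.

Definition D2 (u v : Hel) (x y : 'I_7) : int := u x * v y - v x * u y.

Ltac unr := rewrite /br /ncmul !big_ord_recr !big_ord0 /=;
  rewrite ?mul0r ?mulr0 ?add0r ?addr0 ?subr0 ?sub0r /=.

Lemma br_hv2 u v x y : br (hv u) (hv v) [:: x; y] = D2 u v x y.
Proof. by unr. Qed.

Lemma br_hvl h (f : ncs) x y z :
  br (hv h) f [:: x; y; z] = h x * f [:: y; z] - f [:: x; y] * h z.
Proof. by unr. Qed.

Lemma br_hvr (f : ncs) h x y z :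
  br f (hv h) [:: x; y; z] = f [:: x; y] * h z - h x * f [:: y; z].
Proof. by unr. Qed.

Definition Fs (a : Ael) (p : point) (u v : 'I_7) : int :=
  \sum_(j : line | inc p j) D2 (xcoef j) (a j p) u v.

Definition tau3 (a : Ael) (i : line) (p : point) (x y z : 'I_7) : int :=
  (D2 (xcoef i) (a i p) x y * Scoef p z - Scoef p x * D2 (xcoef i) (a i p) y z)
  + (xcoef i x * Fs a p y z - Fs a p x y * xcoef i z).

Lemma tau_val3 a i p x y z : tau_val a i p [:: x; y; z] = tau3 a i p x y z.
Proof.
rewrite /tau_val /ncadd /tau3 /S /X br_hvr br_hvl !br_hv2 /Fs.
by congr (_ + (_ * _ - _ * _)); apply: eq_bigr => j _; rewrite br_hv2.
Qed.

Definition gk (k : 'I_7) : Hel := fun j => (j == k)%:R.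

Definition R3f (k : 'I_7) (i : line) (p : point) (x y z : 'I_7) : int :=
  gk k x * D2 (xcoef i) (Scoef p) y z - D2 (xcoef i) (Scoef p) x y * gk k z.

Lemma R3f_eq k i p x y z : br (gen k) (rbar i p) [:: x; y; z] = R3f k i p x y z.
Proof. by rewrite /gen /rbar /X /S br_hvl !br_hv2. Qed.

Definition hom (n : nat) (f : ncs) := forall w : word, size w != n -> f w = 0.

Lemma hom_hv h : hom 1 (hv h).
Proof. by move=> [|x [|y w]]. Qed.

Lemma hom_ncmul m n f g : hom m f -> hom n g -> hom (m + n) (ncmul f g).
Proof.
move=> hf hg w hw; rewrite /ncmul big1 // => k _.
have kle : (k <= size w)%N by rewrite -ltnS.
have [ek|nk] := eqVneq (k : nat) m.
- rewrite hg ?mulr0 // size_drop; apply: contra hw => /eqP <-.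
  by rewrite -ek subnKC.
- by rewrite hf ?mul0r // size_takel.
Qed.

Lemma hom_br m n f g : hom m f -> hom n g -> hom (m + n) (br f g).
Proof.
move=> hf hg w hw; rewrite /br (hom_ncmul hf hg) // (hom_ncmul hg hf) ?subr0 //.
by rewrite addnC.
Qed.

Lemma hom_tau a i p : hom 3 (tau_val a i p).
Proof.
move=> w hw; rewrite /tau_val /ncadd.
rewrite (@hom_br 2 1) ?(@hom_br 1 2) ?add0r //; try exact: hom_hv.
- move=> v hv0; rewrite big1 // => j _. exact: (@hom_br 1 1 _ _ (hom_hv _) (hom_hv _)).
- exact: (@hom_br 1 1 _ _ (hom_hv _) (hom_hv _)).
Qed.

Lemma hom_R3 k i p : hom 3 (br (gen k) (rbar i p)).
Proof.
apply: (@hom_br 1 2); first exact: hom_hv.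
exact: (@hom_br 1 1 _ _ (hom_hv _) (hom_hv _)).
Qed.

Definition Aadd (a b : Ael) : Ael := fun j q k => a j q k + b j q k.
Definition Ascale (m : int) (a : Ael) : Ael := fun j q k => m * a j q k.
Definition A0 : Ael := fun _ _ _ => 0.
Definition delta (j : line) (q : point) (k : 'I_7) : Ael :=
  fun j' q' k' => ((j' == j) && (q' == q) && (k' == k))%:R.
Definition lf := line -> point -> 'I_7 -> int.
Definition evl (a : Ael) (L : lf) : int :=
  \sum_(j : line) \sum_(q : point) \sum_(k : 'I_7) L j q k * a j q k.

Lemma bigA_eval (I : Type) (r : seq I) (P : pred I) (F : I -> Ael) j q k :
  (\big[Aadd/A0]_(x <- r | P x) F x) j q k = \sum_(x <- r | P x) F x j q k.
Proof.
apply: (big_morph (fun a : Ael => a j q k)) => //.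
Qed.

Lemma evl_ind (a : Ael) j q k :
  evl a (fun j' q' k' => ((j' == j) && (q' == q) && (k' == k))%:R) = a j q k.
Proof.
rewrite /evl (bigD1 j) //= [X in _ + X]big1 ?addr0; last first.
  move=> j' /negPf Hj; apply: big1 => q' _; apply: big1 => k' _; by rewrite Hj mul0r.
rewrite (bigD1 q) //= [X in _ + X]big1 ?addr0; last first.
  move=> q' /negPf Hq; apply: big1 => k' _; by rewrite Hq andbF mul0r.
rewrite (bigD1 k) //= [X in _ + X]big1 ?addr0; last first.
  move=> k' /negPf Hk; by rewrite Hk andbF mul0r.
by rewrite !eqxx mul1r.
Qed.

Lemma evl_delta L j q k : evl (delta j q k) L = L j q k.
Proof.
rewrite /evl /delta (bigD1 j) //= [X in _ + X]big1 ?addr0; last first.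
  move=> j' /negPf Hj; apply: big1 => q' _; apply: big1 => k' _; by rewrite Hj mulr0.
rewrite (bigD1 q) //= [X in _ + X]big1 ?addr0; last first.
  move=> q' /negPf Hq; apply: big1 => k' _; by rewrite Hq andbF mulr0.
rewrite (bigD1 k) //= [X in _ + X]big1 ?addr0; last first.
  move=> k' /negPf Hk; by rewrite Hk andbF mulr0.
by rewrite !eqxx mulr1.
Qed.

Lemma decomp (a : Ael) :
  a = \big[Aadd/A0]_(j : line) \big[Aadd/A0]_(q : point) \big[Aadd/A0]_(k : 'I_7)
         Ascale (a j q k) (delta j q k).
Proof.
apply: functional_extensionality => j; apply: functional_extensionality => q.
apply: functional_extensionality => k.
rewrite bigA_eval -(evl_ind a j q k) /evl; apply: eq_bigr => j' _.
rewrite bigA_eval; apply: eq_bigr => q' _.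
rewrite bigA_eval; apply: eq_bigr => k' _.
rewrite /Ascale /delta mulrC; congr (_ * _).
by rewrite (eq_sym j) (eq_sym q) (eq_sym k).
Qed.

Lemma lin_repr (Phi : Ael -> int)
  (Hadd : forall a b, Phi (Aadd a b) = Phi a + Phi b)
  (Hsc : forall m a, Phi (Ascale m a) = m * Phi a) (a : Ael) :
  Phi a = evl a (fun j q k => Phi (delta j q k)).
Proof.
have H0 : Phi A0 = 0.
  have -> : A0 = Ascale 0 A0.
    by apply: functional_extensionality => j; apply: functional_extensionality => q;
       apply: functional_extensionality => k; rewrite /Ascale mul0r.
  by rewrite Hsc mul0r.
rewrite {1}(decomp a).
rewrite (big_morph Phi Hadd H0) /evl; apply: eq_bigr => j _.
rewrite (big_morph Phi Hadd H0); apply: eq_bigr => q _.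
rewrite (big_morph Phi Hadd H0); apply: eq_bigr => k _.
by rewrite Hsc mulrC.
Qed.

Lemma Fs_add a b p u v : Fs (Aadd a b) p u v = Fs a p u v + Fs b p u v.
Proof.
rewrite /Fs -big_split /=; apply: eq_bigr => j _; rewrite /D2 /Aadd; ring.
Qed.

Lemma Fs_sc m a p u v : Fs (Ascale m a) p u v = m * Fs a p u v.
Proof.
rewrite /Fs mulr_sumr; apply: eq_bigr => j _; rewrite /D2 /Ascale; ring.
Qed.

Lemma tau3_add a b i p x y z :
  tau3 (Aadd a b) i p x y z = tau3 a i p x y z + tau3 b i p x y z.
Proof. rewrite /tau3 !Fs_add /D2 /Aadd; ring. Qed.

Lemma tau3_sc m a i p x y z :
  tau3 (Ascale m a) i p x y z = m * tau3 a i p x y z.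
Proof. rewrite /tau3 !Fs_sc /D2 /Ascale; ring. Qed.

Lemma tau_add a b i p w :
  tau_val (Aadd a b) i p w = tau_val a i p w + tau_val b i p w.
Proof.
have [/eqP|hw] := eqVneq (size w) 3; last by rewrite !hom_tau // addr0.
by case: w => [|x [|y [|z [|? ?]]]] //= _; rewrite !tau_val3 tau3_add.
Qed.

Lemma tau_sc m a i p w : tau_val (Ascale m a) i p w = m * tau_val a i p w.
Proof.
have [/eqP|hw] := eqVneq (size w) 3; last by rewrite !hom_tau // mulr0.
by case: w => [|x [|y [|z [|? ?]]]] //= _; rewrite !tau_val3 tau3_sc.
Qed.

Definition ordn (n m : nat) : 'I_n.+1 := Ordinal (ltn_pmod m (ltn0Sn n)).
Definition ordl (n : nat) : seq 'I_n.+1 := map (ordn n) (iota 0 n.+1).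
Lemma index_enum_ordl n : index_enum 'I_n.+1 = ordl n.
Proof.
apply: (inj_map val_inj); rewrite [index_enum _]unlock -enumT val_enum_ord.
rewrite /ordl -map_comp; rewrite -[LHS]map_id; apply/eq_in_map => m.
rewrite mem_iota add0n /= => h; by rewrite /= modn_small.
Qed.
Lemma mem_ordl n (x : 'I_n.+1) : x \in ordl n.
Proof. by rewrite -index_enum_ordl mem_index_enum. Qed.
Lemma ordnK n m : (m <= n)%N -> nat_of_ord (ordn n m) = m.
Proof. by move=> h; rewrite /= modn_small. Qed.

Definition sumO n (P : pred 'I_n.+1) (F : 'I_n.+1 -> int) : int :=
  foldr (fun i acc => if P i then F i + acc else acc) 0 (ordl n).
Lemma big_sumO n (P : pred 'I_n.+1) F : \sum_(i : 'I_n.+1 | P i) F i = @sumO n P F.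
Proof. by rewrite unlock index_enum_ordl. Qed.
Definition sumS (I : Type) (s : seq I) (F : I -> int) : int :=
  foldr (fun e acc => F e + acc) 0 s.
Lemma big_sumS (I : Type) (s : seq I) (F : I -> int) : \sum_(e <- s) F e = @sumS I s F.
Proof. by rewrite unlock. Qed.

Definition minlinec (p : point) : nat :=
  foldr (fun j acc => if inc p j then minn (nat_of_ord j) acc else acc) 8%N (ordl 7).
Lemma minlineE p : minline p = minlinec p.
Proof. by rewrite /minline unlock index_enum_ordl. Qed.
Definition inBc (i : line) (p : point) := inA i p && (nat_of_ord i != minlinec p).
Lemma inBE i p : inB i p = inBc i p.
Proof. by rewrite /inB /inBc minlineE. Qed.

Definition Fsc (a : Ael) (p : point) (u v : 'I_7) : int :=
  sumO (fun j : line => inc p j) (fun j => D2 (xcoef j) (a j p) u v).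
Definition tau3c (a : Ael) (i : line) (p : point) (x y z : 'I_7) : int :=
  (D2 (xcoef i) (a i p) x y * Scoef p z - Scoef p x * D2 (xcoef i) (a i p) y z)
  + (xcoef i x * Fsc a p y z - Fsc a p x y * xcoef i z).
Lemma tau3E a i p x y z : tau3 a i p x y z = tau3c a i p x y z.
Proof. by rewrite /tau3 /tau3c /Fs /Fsc !big_sumO. Qed.

Definition entry := (nat * nat * nat * int)%type.
Definition lk3 (s : seq entry) (a b c : nat) : int :=
  foldr (fun e acc => if [&& e.1.1.1 == a, e.1.1.2 == b & e.1.2 == c] then e.2 + acc else acc) 0 s.
Definition lfs (s : seq entry) : lf := fun j q k => lk3 s j q k.

Lemma allO3 n1 n2 n3 (P : 'I_n1.+1 -> 'I_n2.+1 -> 'I_n3.+1 -> bool) :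
  all (fun x => all (fun y => all (fun z => P x y z) (ordl n3)) (ordl n2)) (ordl n1) ->
  forall x y z, P x y z.
Proof.
move=> /allP H x y z.
by have /allP /(_ y (mem_ordl _)) /allP /(_ z (mem_ordl _)) := H x (mem_ordl _).
Qed.

Lemma allO2 n1 n2 (P : 'I_n1.+1 -> 'I_n2.+1 -> bool) :
  all (fun x => all (fun y => P x y) (ordl n2)) (ordl n1) -> forall x y, P x y.
Proof.
move=> /allP H x y.
by have /allP /(_ y (mem_ordl _)) := H x (mem_ordl _).
Qed.

Definition wfun (e : entry) : 'I_7 * 'I_7 * 'I_7 := (ordn 6 e.1.1.1, ordn 6 e.1.1.2, ordn 6 e.1.2).

Lemma phi_kill (f : ncs) (phi : seq entry) :
  inR3 f ->
  (forall k i p, inB i p ->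
     \sum_(e <- phi) e.2 * R3f k i p (ordn 6 e.1.1.1) (ordn 6 e.1.1.2) (ordn 6 e.1.2) = 0) ->
  \sum_(e <- phi) e.2 * f [:: ordn 6 e.1.1.1; ordn 6 e.1.1.2; ordn 6 e.1.2] = 0.
Proof.
move=> [c Hc] H.
transitivity (\sum_(e <- phi) \sum_(k : 'I_7) \sum_(i : line) \sum_(p : point | inB i p)
   c k i p * (e.2 * R3f k i p (ordn 6 e.1.1.1) (ordn 6 e.1.1.2) (ordn 6 e.1.2))).
  apply: eq_bigr => e _; rewrite Hc mulr_sumr; apply: eq_bigr => k _.
  rewrite mulr_sumr; apply: eq_bigr => i _; rewrite mulr_sumr; apply: eq_bigr => p _.
  by rewrite R3f_eq mulrCA.
rewrite exchange_big big1 // => k _; rewrite exchange_big big1 // => i _.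
rewrite exchange_big big1 //= => p Hp.
by rewrite -mulr_sumr H // mulr0.
Qed.

Lemma eq_ordn n (k : 'I_n.+1) m : (m <= n)%N -> (m == k :> nat) = (k == ordn n m).
Proof.
move=> h; apply/eqP/eqP => E.
  by apply: val_inj => /=; rewrite modn_small ?ltnS // E.
by rewrite E /= modn_small.
Qed.

Lemma pin (e : entry) (G : 'I_7 -> line -> point -> int) :
  (e.1.1.1 < 7)%N -> (e.1.1.2 < 8)%N -> (e.1.2 < 12)%N ->
  inB (ordn 7 e.1.1.2) (ordn 11 e.1.2) ->
  \sum_(k : 'I_7) \sum_(i : line) \sum_(p : point | inB i p)
     ((if [&& e.1.1.1 == k :> nat, e.1.1.2 == i :> nat & e.1.2 == p :> nat]
       then e.2 else 0) * G k i p)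
  = e.2 * G (ordn 6 e.1.1.1) (ordn 7 e.1.1.2) (ordn 11 e.1.2).
Proof.
move=> h1 h2 h3 hB.
have E1 : forall k : 'I_7, (e.1.1.1 == k :> nat) = (k == ordn 6 e.1.1.1).
  by move=> k; apply: eq_ordn; rewrite -ltnS.
have E2 : forall k : line, (e.1.1.2 == k :> nat) = (k == ordn 7 e.1.1.2).
  by move=> k; apply: eq_ordn; rewrite -ltnS.
have E3 : forall k : point, (e.1.2 == k :> nat) = (k == ordn 11 e.1.2).
  by move=> k; apply: eq_ordn; rewrite -ltnS.
transitivity (\sum_(k : 'I_7) \sum_(i : line) \sum_(p : point | inB i p)
     ((if [&& k == ordn 6 e.1.1.1, i == ordn 7 e.1.1.2 & p == ordn 11 e.1.2]
       then e.2 else 0) * G k i p)).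
  apply: eq_bigr => k _; apply: eq_bigr => i _; apply: eq_bigr => p _.
  by rewrite E1 E2 E3.
rewrite (bigD1 (ordn 6 e.1.1.1)) //= [X in _ + X]big1 ?addr0; last first.
  move=> k /negPf Hk; apply: big1 => i _; apply: big1 => p _.
  by rewrite Hk mul0r.
rewrite (bigD1 (ordn 7 e.1.1.2)) //= [X in _ + X]big1 ?addr0; last first.
  move=> i /negPf Hi; apply: big1 => p _.
  by rewrite Hi andbF mul0r.
rewrite (bigD1 (ordn 11 e.1.2)) //= [X in _ + X]big1 ?addr0; last first.
  move=> p /andP[_ /negPf Hp].
  by rewrite Hp !andbF mul0r.
by rewrite !eqxx.
Qed.

Definition cfun (s : seq entry) (k : 'I_7) (i : line) (p : point) : int :=
  \sum_(e <- s) (if [&& e.1.1.1 == k :> nat, e.1.1.2 == i :> nat & e.1.2 == p :> nat]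
                 then e.2 else 0).

Definition R3sum (s : seq entry) (x y z : 'I_7) : int :=
  sumS s (fun e => e.2 * R3f (ordn 6 e.1.1.1) (ordn 7 e.1.1.2) (ordn 11 e.1.2) x y z).

Definition okGb (s : seq entry) : bool :=
  all (fun e => [&& (e.1.1.1 < 7)%N, (e.1.1.2 < 8)%N, (e.1.2 < 12)%N &
                    inBc (ordn 7 e.1.1.2) (ordn 11 e.1.2)]) s.

Lemma okG_sound0 g s i p : okGb s ->
  (forall x y z, tau3c g i p x y z = R3sum s x y z) -> inR3 (tau_val g i p).
Proof.
move=> /allP Hs Hw; exists (cfun s) => w.
have [/eqP|hw] := eqVneq (size w) 3; last first.
  rewrite hom_tau // big1 // => k _; apply: big1 => i' _; apply: big1 => p' _.
  by rewrite hom_R3 // mulr0.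
case: w => [|x [|y [|z [|? ?]]]] //= _.
rewrite tau_val3 tau3E Hw /R3sum -big_sumS.
transitivity (\sum_(e <- s) \sum_(k : 'I_7) \sum_(i' : line) \sum_(p' : point | inB i' p')
     ((if [&& e.1.1.1 == k :> nat, e.1.1.2 == i' :> nat & e.1.2 == p' :> nat]
       then e.2 else 0) * br (gen k) (rbar i' p') [:: x; y; z])).
  apply: eq_big_seq => e /Hs /and4P[h1 h2 h3 h4].
  rewrite pin // ?inBE // R3f_eq //.
rewrite exchange_big; apply: eq_bigr => k _; rewrite exchange_big; apply: eq_bigr => i' _.
rewrite exchange_big; apply: eq_bigr => p' _ /=.
by rewrite /cfun mulr_suml.
Qed.

Definition tab7 (f : 'I_7 -> int) : seq int := map f (ordl 6).
Definition tab77 (f : 'I_7 -> 'I_7 -> int) : seq (seq int) := map (fun u => tab7 (f u)) (ordl 6).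
Definition at7 (t : seq int) (x : 'I_7) : int := nth 0 t x.
Definition at77 (t : seq (seq int)) (x y : 'I_7) : int := nth 0 (nth [::] t x) y.

Lemma nth_ordl n (x : 'I_n.+1) d : nth d (ordl n) x = x.
Proof.
rewrite /ordl (nth_map 0%N) ?size_iota // nth_iota // add0n.
by apply: val_inj; rewrite /= modn_small.
Qed.
Lemma at7E f x : at7 (tab7 f) x = f x.
Proof. by rewrite /at7 /tab7 (nth_map x) ?nth_ordl // /ordl size_map size_iota. Qed.
Lemma at77E f x y : at77 (tab77 f) x y = f x y.
Proof.
rewrite /at77 /tab77 (nth_map x) ?nth_ordl; last by rewrite /ordl size_map size_iota.
exact: at7E.
Qed.

Definition okG (g : Ael) (s : seq entry) (i : line) (p : point) : bool :=
  if okGb s then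
   let T := tab77 (D2 (xcoef i) (g i p)) in
   let F := tab77 (Fsc g p) in
   let X := tab7 (xcoef i) in
   let S := tab7 (Scoef p) in
   let R := map (fun e => (e.2, ordn 6 e.1.1.1,
                 tab77 (D2 (xcoef (ordn 7 e.1.1.2)) (Scoef (ordn 11 e.1.2))))) s in
   all (fun x => all (fun y => all (fun z =>
     (at77 T x y * at7 S z - at7 S x * at77 T y z) + (at7 X x * at77 F y z - at77 F x y * at7 X z)
     == sumS R (fun r => r.1.1 * (gk r.1.2 x * at77 r.2 y z - at77 r.2 x y * gk r.1.2 z)))
        (ordl 6)) (ordl 6)) (ordl 6)
  else false.

Lemma okG_sound g s i p : okG g s i p -> inR3 (tau_val g i p).
Proof.
rewrite /okG; case: ifP => // hb H; apply: (@okG_sound0 g s i p hb) => x y z.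
rewrite /tau3c; have := allO3 H x y z; rewrite !at77E !at7E => /eqP ->.
rewrite /R3sum; elim: s {hb H} => //= e s ->.
by rewrite !at77E.
Qed.

Lemma inR3_ext f g : inR3 f -> (forall w, f w = g w) -> inR3 g.
Proof. by move=> [c Hc] E; exists c => w; rewrite -E. Qed.

Lemma inR3_add f g : inR3 f -> inR3 g -> inR3 (fun w => f w + g w).
Proof.
move=> [c1 H1] [c2 H2]; exists (fun k i p => c1 k i p + c2 k i p) => w.
rewrite H1 H2 -big_split; apply: eq_bigr => k _; rewrite -big_split; apply: eq_bigr => i _.
rewrite -big_split; apply: eq_bigr => p _; by rewrite mulrDl.
Qed.

Lemma inR3_scale m f : inR3 f -> inR3 (fun w => m * f w).
Proof.
move=> [c H]; exists (fun k i p => m * c k i p) => w.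
rewrite H mulr_sumr; apply: eq_bigr => k _; rewrite mulr_sumr; apply: eq_bigr => i _.
rewrite mulr_sumr; apply: eq_bigr => p _; by rewrite mulrA.
Qed.

Lemma inR3_0 : inR3 (fun _ => 0).
Proof.
exists (fun _ _ _ => 0) => w; rewrite big1 // => k _; apply: big1 => i _; apply: big1 => p _.
by rewrite mul0r.
Qed.

Lemma tau_vanish (g : Ael) i p : (forall j k, g j p k = 0) -> forall w, tau_val g i p w = 0.
Proof.
move=> H w; have [/eqP|hw] := eqVneq (size w) 3; last by rewrite hom_tau.
case: w => [|x [|y [|z [|? ?]]]] //= _.
have HF : forall u v, Fs g p u v = 0.
  by move=> u v; rewrite /Fs big1 // => j _; rewrite /D2 !H mulr0 mul0r subr0.
by rewrite tau_val3 /tau3 !HF /D2 !H !(mulr0, mul0r, subr0, addr0).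
Qed.

Definition okG' (g : Ael) (s : seq entry) (i : line) (p : point) : bool :=
  if (if s == [::] then all (fun j => all (fun k => g j p k == 0) (ordl 6)) (ordl 7) else false)
  then true else okG g s i p.

Lemma okG'_sound g s i p : okG' g s i p -> inR3 (tau_val g i p).
Proof.
rewrite /okG'; case: ifP => [h _|_]; last exact: okG_sound.
move: h => /andP[_ /allO2 H].
apply: (inR3_ext inR3_0) => w; rewrite tau_vanish // => j k.
exact/eqP/H.
Qed.


Definition phisum (phi : seq entry) (f : 'I_7 -> 'I_7 -> 'I_7 -> int) : int :=
  sumS phi (fun e => e.2 * f (ordn 6 e.1.1.1) (ordn 6 e.1.1.2) (ordn 6 e.1.2)).
Definition Eentry := (nat * nat * seq entry * seq entry)%type.
Definition checkE (t : Eentry) : bool :=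
  let: (i0, p0, phi, L) := t in
  if inBc (ordn 7 i0) (ordn 11 p0) then
  if all (fun k => all (fun i' => all (fun p' =>
        if inBc i' p' then phisum phi (R3f k i' p') == 0 else true)
         (ordl 11)) (ordl 7)) (ordl 6) then
  if all (fun e => e.1.1.2 == nat_of_ord (ordn 11 p0)) L then
    all (fun j => all (fun k =>
         phisum phi (tau3c (delta j (ordn 11 p0) k) (ordn 7 i0) (ordn 11 p0))
           == lk3 L j (ordn 11 p0) k)
         (ordl 6)) (ordl 7)
  else false else false else false.

Lemma evl_ext a (L1 L2 : lf) : (forall j q k, L1 j q k = L2 j q k) -> evl a L1 = evl a L2.
Proof.
move=> H; apply: eq_bigr => j _; apply: eq_bigr => q _; apply: eq_bigr => k _; by rewrite H.
Qed.

Lemma lk3_out (s : seq entry) (P : nat) a b c :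
  all (fun e => e.1.1.2 == P) s -> b != P -> lk3 s a b c = 0.
Proof.
move=> hs hb; elim: s hs => [|e s IH] //= /andP[/eqP he hs].
by rewrite IH // he [P == b]eq_sym (negPf hb) andbF.
Qed.

Lemma tau3_vanish (g : Ael) i p x y z : (forall j k, g j p k = 0) -> tau3 g i p x y z = 0.
Proof. by move=> H; rewrite -tau_val3 tau_vanish. Qed.

Lemma checkE_sound a (t : Eentry) : checkE t -> in_ker_tau a -> evl a (lfs t.2) = 0.
Proof.
case: t => [[[i0 p0] phi] L]; rewrite /checkE.
case: ifP => // hB; case: ifP => // /allO3 hK; case: ifP => // hS /allO2 hL Hk /=.
have hR : inR3 (tau_val a (ordn 7 i0) (ordn 11 p0)) by apply: Hk; rewrite inBE.
have Z : \sum_(e <- phi) e.2 * tau_val a (ordn 7 i0) (ordn 11 p0)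
            [:: ordn 6 e.1.1.1; ordn 6 e.1.1.2; ordn 6 e.1.2] = 0.
  apply: (phi_kill hR) => k i' p' hb.
  by have := hK k i' p'; rewrite -inBE hb big_sumS => /eqP.
pose Phi (b : Ael) := \sum_(e <- phi) e.2 * tau3 b (ordn 7 i0) (ordn 11 p0)
                    (ordn 6 e.1.1.1) (ordn 6 e.1.1.2) (ordn 6 e.1.2).
have PZ : Phi a = 0.
  by rewrite -Z; apply: eq_bigr => e _; rewrite tau_val3.
rewrite -PZ (@lin_repr Phi) => [|b c|m b].
- apply: evl_ext => j q k; rewrite /lfs.
  have [->|nq] := eqVneq q (ordn 11 p0).
    rewrite -(eqP (hL j k)) /phisum -big_sumS.
    by apply: eq_bigr => e _; rewrite tau3E.
  rewrite (lk3_out _ _ hS); last first.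
    by apply: contra nq => /eqP e; apply/eqP/val_inj.
  rewrite /Phi big1 // => e _; rewrite tau3_vanish ?mulr0 // => j' k'.
  by rewrite /delta (eq_sym _ q) (negPf nq) andbF.
- by rewrite /Phi -big_split; apply: eq_bigr => e _; rewrite tau3_add mulrDr.
- by rewrite /Phi mulr_sumr; apply: eq_bigr => e _; rewrite tau3_sc mulrCA.
Qed.

Lemma evl_add a b L : evl (Aadd a b) L = evl a L + evl b L.
Proof.
rewrite /evl -big_split; apply: eq_bigr => j _; rewrite -big_split; apply: eq_bigr => q _.
rewrite -big_split; apply: eq_bigr => k _; by rewrite /Aadd mulrDr.
Qed.
Lemma evl_sc m a L : evl (Ascale m a) L = m * evl a L.
Proof.
rewrite /evl mulr_sumr; apply: eq_bigr => j _; rewrite mulr_sumr; apply: eq_bigr => q _.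
rewrite mulr_sumr; apply: eq_bigr => k _; by rewrite /Ascale mulrCA.
Qed.
Lemma evl_addL a (L1 L2 : lf) : evl a (fun j q k => L1 j q k + L2 j q k) = evl a L1 + evl a L2.
Proof.
rewrite /evl -big_split; apply: eq_bigr => j _; rewrite -big_split; apply: eq_bigr => q _.
rewrite -big_split; apply: eq_bigr => k _; by rewrite mulrDl.
Qed.
Lemma evl_scL a m (L : lf) : evl a (fun j q k => m * L j q k) = m * evl a L.
Proof.
rewrite /evl mulr_sumr; apply: eq_bigr => j _; rewrite mulr_sumr; apply: eq_bigr => q _.
rewrite mulr_sumr; apply: eq_bigr => k _; by rewrite mulrA.
Qed.
Lemma evl0 a : evl a (fun _ _ _ => 0) = 0.
Proof.
rewrite /evl big1 // => j _; rewrite big1 // => q _; rewrite big1 // => k _; by rewrite mul0r.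
Qed.
Lemma evl_sumS a (lam : seq (nat * int)) (F : nat * int -> lf) :
  evl a (fun j q k => sumS lam (fun e => e.2 * F e j q k)) = sumS lam (fun e => e.2 * evl a (F e)).
Proof.
elim: lam => [|e lam IH] /=; first exact: evl0.
by rewrite evl_addL evl_scL IH.
Qed.

Lemma simpl0 (c0 : line -> point -> int) j q k : inA j q ->
  \sum_(i : line) \sum_(p : point | inA i p) c0 i p * a0 i p j q k = c0 j q * xcoef j k.
Proof.
move=> hA; rewrite (bigD1 j) //= [X in _ + X]big1 ?addr0; last first.
  move=> i /negPf Hi; apply: big1 => p _; by rewrite /a0 (eq_sym j) Hi mul0r mulr0.
rewrite (bigD1 q) //= [X in _ + X]big1 ?addr0; last first.
  move=> p /andP[_ /negPf Hp]; by rewrite /a0 (eq_sym q) Hp andbF mul0r mulr0.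
by rewrite /a0 !eqxx mul1r.
Qed.

Lemma simpl1 (c1 : line -> point -> int) j q k : inP0 q ->
  \sum_(i : line | nat_of_ord i != 0%N) \sum_(p : point | inP0 p) c1 i p * a1 i p j q k
  = \sum_(i : line | nat_of_ord i != 0%N) c1 i q * xcoef i k.
Proof.
move=> hq; apply: eq_bigr => i _.
rewrite (bigD1 q) //= [X in _ + X]big1 ?addr0; last first.
  move=> p /andP[_ /negPf Hp]; by rewrite /a1 (eq_sym q) Hp mul0r mulr0.
by rewrite /a1 eqxx mul1r.
Qed.

Lemma simpl2 (c2 : line -> point -> point -> int) j q k : inA j q ->
  \sum_(i : line | nat_of_ord i != 0%N) \sum_(p1 : point | inP0 p1 && inc p1 i)
     \sum_(p2 : point | inP0 p2 && inc p2 i) c2 i p1 p2 * a2 i p1 p2 j q k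
  = \sum_(p2 : point | inP0 p2 && inc p2 j) c2 j q p2 * Scoef p2 k.
Proof.
move=> /and3P[hj hq hqj]; rewrite (bigD1 j) //= [X in _ + X]big1 ?addr0; last first.
  move=> i /andP[_ /negPf Hi]; apply: big1 => p1 _; apply: big1 => p2 _.
  by rewrite /a2 (eq_sym j) Hi mul0r mulr0.
rewrite (bigD1 q) /= ?hq ?hqj // [X in _ + X]big1 ?addr0; last first.
  move=> p1 /andP[_ /negPf Hp]; apply: big1 => p2 _.
  by rewrite /a2 (eq_sym q) Hp andbF mul0r mulr0.
by apply: eq_bigr => p2 _; rewrite /a2 !eqxx mul1r.
Qed.

Open Scope nat_scope.
(* generated data *)
Definition Etab : seq Eentry := [:: (3,4,[:: (0,0,2,(Negz 0)); (2,2,4,(Posz 1)); (0,4,2,(Posz 1)); (0,2,2,(Negz 0)); (0,0,4,(Posz 1))],[:: (1,4,2,(Posz 1)); (1,4,4,(Negz 0)); (3,4,0,(Negz 0)); (3,4,4,(Posz 1)); (5,4,0,(Posz 1)); (5,4,2,(Negz 0))]); (3,4,[:: (4,5,6,(Posz 1)); (0,6,2,(Posz 1)); (2,4,6,(Posz 1)); (0,2,6,(Posz 1)); (2,3,6,(Posz 1)); (0,1,4,(Negz 0)); (0,4,6,(Negz 0)); (0,3,2,(Negz 0)); (0,1,6,(Posz 1)); (2,5,4,(Negz 0)); (2,6,4,(Posz 1))],[:: (1,4,3,(Posz 1)); (1,4,6,(Negz 0)); (3,4,3,(Negz 0)); (3,4,5,(Negz 0)); (3,4,6,(Posz 1)); (5,4,5,(Posz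 1))]); (5,4,[:: (4,5,6,(Posz 1)); (0,6,2,(Posz 1)); (2,4,6,(Posz 1)); (0,2,6,(Posz 1)); (2,3,6,(Posz 1)); (0,1,4,(Negz 0)); (0,4,6,(Negz 0)); (0,3,2,(Negz 0)); (0,1,6,(Posz 1)); (2,5,4,(Negz 0)); (2,6,4,(Posz 1))],[:: (1,4,1,(Posz 1)); (3,4,5,(Posz 1)); (3,4,6,(Negz 0)); (5,4,1,(Negz 0)); (5,4,5,(Negz 0)); (5,4,6,(Posz 1))]); (7,5,[:: (0,3,6,(Posz 1)); (3,6,6,(Posz 1)); (0,0,6,(Negz 0)); (0,6,6,(Negz 0)); (0,0,3,(Posz 1))],[:: (1,5,3,(Negz 0)); (1,5,6,(Posz 1)); (4,5,0,(Posz 1)); (4,5,6,(Negz 0)); (7,5,0,(Negz 0)); (7,5,3,(Posz 1))]); (7,5,[:: (4,5,6,(Posz 1)); (0,6,2,(Posz 1)); (2,4,6,(Posz 1)); (0,2,6,(Posz 1)); (2,3,6,(Posz 1)); (0,1,4,(Negz 0)); (0,4,6,(Negz 0)); (0,3,2,(Negz 0)); (0,1,6,(Posz 1)); (2,5,4,(Negz 0)); (2,6,4,(Posz 1))],[:: (1,5,1,(Negz 0)); (1,5,2,(Negz 0)); (1,5,4,(Posz 1)); (4,5,2,(Posz 1)); (7,5,1,(Posz 1)); (7,5,4,(Negz 0))]); (4,5,[:: (0,1,5,(Negz 0)); (0,6,5,(Negz 0)); (0,4,5,(Negz 0)); (0,6,2,(Posz 1)); (2,5,3,(Posz 1)); (2,6,3,(Negz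 0)); (2,3,5,(Posz 1)); (2,4,5,(Posz 1)); (0,3,2,(Negz 0)); (0,1,3,(Posz 1)); (0,2,5,(Posz 1)); (0,3,5,(Posz 1)); (3,6,5,(Posz 1))],[:: (1,5,1,(Negz 0)); (4,5,1,(Posz 1)); (4,5,2,(Posz 1)); (4,5,5,(Negz 0)); (7,5,2,(Negz 0)); (7,5,5,(Posz 1))]); (6,6,[:: (0,1,5,(Negz 0)); (0,6,5,(Negz 0)); (0,4,5,(Negz 0)); (0,6,2,(Posz 1)); (2,5,3,(Posz 1)); (2,6,3,(Negz 0)); (2,3,5,(Posz 1)); (2,4,5,(Posz 1)); (0,3,2,(Negz 0)); (0,1,3,(Posz 1)); (0,2,5,(Posz 1)); (0,3,5,(Posz 1)); (3,6,5,(Posz 1))],[:: (1,6,1,(Posz 1)); (1,6,2,(Negz 0)); (1,6,3,(Negz 0)); (1,6,4,(Posz 1)); (1,6,6,(Posz 1)); (6,6,1,(Negz 0)); (6,6,2,(Posz 1)); (6,6,3,(Posz 1)); (6,6,4,(Negz 0)); (6,6,6,(Negz 0))]); (3,7,[:: (1,6,5,(Negz 0)); (4,5,6,(Posz 1)); (0,4,1,(Posz 1)); (1,6,2,(Posz 1)); (0,6,2,(Posz 1)); (2,4,6,(Posz 1)); (0,2,1,(Negz 0)); (2,3,5,(Negz 0)); (0,2,6,(Posz 1)); (0,1,2,(Negz 0)); (1,4,2,(Negz 0)); (1,4,5,(Posz 1)); (4,6,5,(Posz 1)); (2,3,6,(Posz 1)); (0,4,6,(Negz 0)); (0,3,2,(Negz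 0)); (0,1,6,(Posz 1)); (1,5,2,(Negz 0)); (1,3,2,(Posz 1))],[:: (2,7,0,(Negz 0)); (2,7,3,(Negz 0)); (2,7,4,(Posz 1)); (2,7,5,(Posz 1)); (2,7,6,(Negz 0)); (3,7,0,(Posz 1)); (3,7,3,(Posz 1)); (3,7,4,(Negz 0)); (3,7,5,(Negz 0)); (3,7,6,(Posz 1))]); (6,8,[:: (3,5,5,(Posz 1)); (1,3,5,(Posz 1)); (1,5,5,(Negz 0)); (1,1,5,(Negz 0)); (1,1,3,(Posz 1))],[:: (2,8,3,(Negz 0)); (2,8,5,(Posz 1)); (4,8,1,(Posz 1)); (4,8,5,(Negz 0)); (6,8,1,(Negz 0)); (6,8,3,(Posz 1))]); (4,8,[:: (0,1,5,(Negz 0)); (0,6,5,(Negz 0)); (0,4,5,(Negz 0)); (0,6,2,(Posz 1)); (2,5,3,(Posz 1)); (2,6,3,(Negz 0)); (2,3,5,(Posz 1)); (2,4,5,(Posz 1)); (0,3,2,(Negz 0)); (0,1,3,(Posz 1)); (0,2,5,(Posz 1)); (0,3,5,(Posz 1)); (3,6,5,(Posz 1))],[:: (2,8,0,(Posz 1)); (4,8,0,(Negz 0)); (4,8,2,(Negz 0)); (4,8,6,(Posz 1)); (6,8,2,(Posz 1)); (6,8,6,(Negz 0))]); (6,8,[:: (1,6,5,(Negz 0)); (4,5,6,(Posz 1)); (1,5,6,(Negz 0)); (1,3,6,(Posz 1)); (2,5,3,(Negz 0)); (2,6,3,(Posz 1)); (2,3,5,(Negz 0)); (1,4,5,(Posz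 1)); (4,6,5,(Posz 1)); (2,3,6,(Posz 1)); (0,1,3,(Negz 0)); (0,1,6,(Posz 1)); (0,6,1,(Posz 1)); (0,3,1,(Negz 0)); (3,5,6,(Posz 1))],[:: (2,8,4,(Negz 0)); (2,8,6,(Posz 1)); (4,8,2,(Negz 0)); (6,8,2,(Posz 1)); (6,8,4,(Posz 1)); (6,8,6,(Negz 0))]); (5,9,[:: (1,1,4,(Posz 1)); (1,6,4,(Negz 0)); (1,1,6,(Negz 0)); (4,4,6,(Negz 0)); (1,4,4,(Posz 1))],[:: (2,9,4,(Negz 0)); (2,9,6,(Posz 1)); (5,9,1,(Posz 1)); (5,9,6,(Negz 0)); (7,9,1,(Negz 0)); (7,9,4,(Posz 1))]); (5,9,[:: (4,5,6,(Posz 1)); (0,6,2,(Posz 1)); (2,4,6,(Posz 1)); (0,2,6,(Posz 1)); (2,3,6,(Posz 1)); (0,1,4,(Negz 0)); (0,4,6,(Negz 0)); (0,3,2,(Negz 0)); (0,1,6,(Posz 1)); (2,5,4,(Negz 0)); (2,6,4,(Posz 1))],[:: (2,9,0,(Negz 0)); (5,9,0,(Posz 1)); (5,9,2,(Negz 0)); (5,9,5,(Posz 1)); (7,9,2,(Posz 1)); (7,9,5,(Negz 0))]); (7,9,[:: (1,6,5,(Negz 0)); (4,5,6,(Posz 1)); (1,5,6,(Negz 0)); (1,3,6,(Posz 1)); (2,5,3,(Negz 0)); (2,6,3,(Posz 1)); (2,3,5,(Negz 0)); (1,4,5,(Posz 1)); (4,6,5,(Posz 1)); (2,3,6,(Posz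 1)); (0,1,3,(Negz 0)); (0,1,6,(Posz 1)); (0,6,1,(Posz 1)); (0,3,1,(Negz 0)); (3,5,6,(Posz 1))],[:: (2,9,0,(Posz 1)); (2,9,3,(Negz 0)); (2,9,5,(Posz 1)); (5,9,5,(Negz 0)); (7,9,0,(Negz 0)); (7,9,3,(Posz 1))]); (6,10,[:: (2,2,5,(Negz 0)); (2,6,5,(Posz 1)); (2,5,5,(Negz 0)); (2,2,6,(Posz 1)); (5,5,6,(Posz 1))],[:: (3,10,5,(Posz 1)); (3,10,6,(Negz 0)); (6,10,2,(Negz 0)); (6,10,6,(Posz 1)); (7,10,2,(Posz 1)); (7,10,5,(Negz 0))]); (7,10,[:: (4,5,6,(Posz 1)); (0,6,2,(Posz 1)); (2,4,6,(Posz 1)); (0,2,6,(Posz 1)); (2,3,6,(Posz 1)); (0,1,4,(Negz 0)); (0,4,6,(Negz 0)); (0,3,2,(Negz 0)); (0,1,6,(Posz 1)); (2,5,4,(Negz 0)); (2,6,4,(Posz 1))],[:: (3,10,0,(Posz 1)); (3,10,3,(Negz 0)); (3,10,4,(Negz 0)); (6,10,4,(Posz 1)); (7,10,0,(Negz 0)); (7,10,3,(Posz 1))]); (6,10,[:: (1,6,5,(Negz 0)); (4,5,6,(Posz 1)); (1,5,6,(Negz 0)); (1,3,6,(Posz 1)); (2,5,3,(Negz 0)); (2,6,3,(Posz 1)); (2,3,5,(Negz 0)); (1,4,5,(Posz 1)); (4,6,5,(Posz 1)); (2,3,6,(Posz 1)); (0,1,3,(Negz 0)); (0,1,6,(Posz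 1)); (0,6,1,(Posz 1)); (0,3,1,(Negz 0)); (3,5,6,(Posz 1))],[:: (3,10,3,(Posz 1)); (6,10,1,(Posz 1)); (6,10,3,(Negz 0)); (6,10,4,(Negz 0)); (7,10,1,(Negz 0)); (7,10,4,(Posz 1))]); (5,11,[:: (2,3,4,(Negz 0)); (0,3,4,(Posz 1)); (1,6,3,(Negz 0)); (1,5,4,(Negz 0)); (0,6,4,(Negz 0)); (2,4,3,(Negz 0)); (0,1,4,(Posz 1)); (0,4,3,(Posz 1)); (0,1,3,(Negz 0)); (1,3,4,(Posz 1)); (0,6,1,(Posz 1)); (0,3,1,(Negz 0)); (0,2,3,(Negz 0)); (1,4,3,(Posz 1)); (3,5,4,(Posz 1)); (3,6,4,(Posz 1))],[:: (4,11,0,(Posz 1)); (4,11,1,(Posz 1)); (4,11,2,(Negz 0)); (4,11,5,(Negz 0)); (4,11,6,(Negz 0)); (5,11,0,(Negz 0)); (5,11,1,(Negz 0)); (5,11,2,(Posz 1)); (5,11,5,(Posz 1)); (5,11,6,(Posz 1))])].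
Definition D0arr : seq (seq (seq entry)) := [:: [::]; [:: [::]; [::]; [::]; [::]; [:: (3,4,3,(Posz 1)); (5,4,5,(Posz 1)); (1,4,0,(Posz 1)); (3,4,4,(Posz 1)); (1,4,3,(Negz 0)); (1,4,5,(Negz 0)); (3,4,0,(Negz 0)); (1,4,4,(Negz 0))]; [:: (7,5,5,(Posz 1)); (7,5,3,(Posz 1)); (7,5,0,(Negz 0)); (1,5,0,(Posz 1)); (1,5,2,(Negz 0)); (1,5,3,(Negz 0)); (4,5,2,(Posz 2)); (1,5,5,(Negz 0)); (7,5,2,(Negz 0))]; [:: (1,6,1,(Posz 1)); (6,6,3,(Posz 1)); (6,6,4,(Posz 1)); (1,6,3,(Negz 0)); (6,6,0,(Negz 0)); (6,6,1,(Negz 0)); (1,6,4,(Negz 0)); (1,6,0,(Posz 1))]]; [:: [::]; [::]; [::]; [::]; [::]; [::]; [::]; [:: (2,7,1,(Posz 1)); (3,7,3,(Posz 1)); (3,7,4,(Posz 1)); (2,7,3,(Negz 0)); (3,7,0,(Negz 0)); (3,7,1,(Negz 0)); (2,7,4,(Negz 0)); (2,7,0,(Posz 1))]; [:: (6,8,3,(Posz 1)); (6,8,4,(Posz 1)); (2,8,2,(Negz 0)); (2,8,3,(Negz 0)); (4,8,2,(Posz 1)); (2,8,4,(Negz 0)); (6,8,1,(Negz 0)); (2,8,1,(Posz 1))]; [:: (7,9,3,(Posz 1)); (7,9,0,(Negz 0)); (2,9,0,(Posz 2)); (7,9,4,(Posz 1)); (2,9,2,(Negz 0)); (2,9,3,(Negz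 0)); (5,9,2,(Posz 1)); (5,9,0,(Negz 0)); (2,9,4,(Negz 0)); (7,9,1,(Negz 0)); (2,9,1,(Posz 1))]]; [:: [::]; [::]; [::]; [::]; [:: (3,4,3,(Posz 2)); (3,4,4,(Negz 0)); (1,4,2,(Negz 0)); (1,4,3,(Negz 1)); (3,4,2,(Posz 1)); (1,4,4,(Posz 1)); (5,4,6,(Negz 0)); (1,4,6,(Posz 2)); (5,4,1,(Posz 1)); (3,4,1,(Negz 0)); (3,4,6,(Negz 0))]; [::]; [::]; [:: (3,7,3,(Posz 1)); (3,7,2,(Posz 1)); (2,7,5,(Posz 1)); (2,7,2,(Negz 0)); (2,7,3,(Negz 0)); (3,7,0,(Negz 0)); (2,7,0,(Posz 1)); (3,7,5,(Negz 0))]; [::]; [::]; [:: (7,10,5,(Posz 1)); (7,10,3,(Negz 0)); (7,10,0,(Posz 1)); (3,10,0,(Negz 0)); (7,10,4,(Negz 0)); (6,10,4,(Posz 1)); (3,10,2,(Posz 1)); (3,10,3,(Posz 1)); (3,10,5,(Negz 0)); (7,10,1,(Posz 1)); (7,10,2,(Negz 0)); (3,10,1,(Negz 0))]]; [:: [::]; [::]; [::]; [::]; [::]; [:: (4,5,3,(Posz 1)); (7,5,3,(Negz 0)); (7,5,0,(Posz 1)); (7,5,4,(Negz 0)); (4,5,4,(Negz 0)); (1,5,2,(Negz 1)); (4,5,2,(Posz 2)); (4,5,0,(Negz 0)); (1,5,4,(Posz 2)); (7,5,1,(Posz 1)); (4,5,1,(Negz 0))]; [::]; [::]; [:: (4,8,3,(Posz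 1)); (6,8,3,(Negz 0)); (2,8,0,(Posz 1)); (6,8,4,(Posz 1)); (4,8,4,(Negz 0)); (4,8,0,(Negz 0)); (6,8,1,(Posz 1)); (4,8,1,(Negz 0))]; [::]; [::]; [:: (5,11,3,(Negz 0)); (5,11,2,(Negz 0)); (4,11,5,(Negz 0)); (4,11,2,(Posz 1)); (4,11,3,(Posz 1)); (5,11,0,(Posz 1)); (4,11,0,(Negz 0)); (5,11,5,(Posz 1))]]; [:: [::]; [::]; [::]; [::]; [:: (3,4,3,(Posz 2)); (5,4,3,(Negz 0)); (5,4,0,(Negz 0)); (5,4,4,(Posz 1)); (3,4,4,(Negz 0)); (1,4,3,(Negz 0)); (3,4,0,(Posz 1)); (5,4,6,(Negz 0)); (1,4,6,(Posz 1))]; [::]; [::]; [::]; [::]; [:: (5,9,3,(Negz 0)); (7,9,3,(Posz 1)); (7,9,0,(Negz 0)); (2,9,0,(Posz 2)); (7,9,4,(Negz 0)); (5,9,4,(Posz 1)); (5,9,0,(Negz 0)); (7,9,1,(Posz 1)); (5,9,1,(Negz 0))]; [::]; [:: (4,11,1,(Posz 1)); (5,11,2,(Negz 0)); (4,11,5,(Negz 0)); (5,11,4,(Posz 1)); (4,11,2,(Posz 1)); (5,11,1,(Negz 0)); (4,11,4,(Negz 0)); (5,11,5,(Posz 1))]]; [:: [::]; [::]; [::]; [::]; [::]; [::]; [:: (1,6,1,(Posz 1)); (6,6,2,(Negz 0)); (1,6,5,(Negz 0)); (6,6,4,(Posz 1)); (1,6,2,(Posz 1)); (6,6,1,(Negz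 0)); (1,6,4,(Negz 0)); (6,6,5,(Posz 1))]; [::]; [:: (6,8,5,(Posz 1)); (6,8,3,(Negz 0)); (6,8,0,(Negz 0)); (2,8,0,(Posz 1)); (6,8,4,(Posz 1)); (2,8,3,(Posz 1)); (2,8,5,(Negz 0)); (2,8,4,(Negz 0)); (6,8,6,(Negz 0)); (2,8,6,(Posz 1))]; [::]; [:: (6,10,3,(Negz 0)); (7,10,5,(Negz 0)); (7,10,3,(Negz 0)); (7,10,0,(Posz 1)); (3,10,3,(Posz 2)); (6,10,2,(Negz 0)); (6,10,0,(Negz 0)); (7,10,2,(Posz 1)); (6,10,5,(Posz 1))]]; [:: [::]; [::]; [::]; [::]; [::]; [:: (7,5,3,(Negz 0)); (7,5,4,(Negz 0)); (1,5,2,(Negz 0)); (1,5,3,(Posz 1)); (4,5,2,(Posz 2)); (1,5,4,(Posz 1)); (7,5,6,(Posz 1)); (1,5,6,(Negz 0)); (7,5,2,(Negz 0))]; [::]; [::]; [::]; [:: (7,9,5,(Negz 0)); (7,9,3,(Posz 1)); (7,9,0,(Negz 1)); (2,9,0,(Posz 2)); (7,9,4,(Negz 0)); (2,9,3,(Negz 0)); (2,9,5,(Posz 1)); (2,9,4,(Posz 1)); (7,9,6,(Posz 1)); (2,9,6,(Negz 0))]; [:: (7,10,5,(Negz 0)); (7,10,3,(Negz 0)); (7,10,4,(Negz 0)); (6,10,4,(Posz 1)); (3,10,3,(Posz 1)); (3,10,5,(Posz 1)); (7,10,6,(Posz 1)); (3,10,6,(Negz 0))]]].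
Definition D1arr : seq (seq (seq entry)) := [:: [::]; [:: [::]; [::]; [::]; [::]; [:: (5,4,0,(Posz 1))]; [:: (7,5,0,(Posz 1))]; [:: (6,6,0,(Posz 1))]; [:: (2,7,0,(Posz 1))]; [:: (2,8,0,(Posz 1))]; [:: (2,9,0,(Posz 1))]; [:: (7,10,3,(Negz 0)); (7,10,0,(Posz 1)); (3,10,3,(Posz 1))]; [:: (5,11,2,(Negz 0)); (4,11,2,(Posz 1)); (5,11,0,(Posz 1))]]; [:: [::]; [::]; [::]; [::]; [:: (3,4,3,(Posz 1)); (1,4,3,(Negz 0)); (5,4,6,(Negz 0)); (1,4,6,(Posz 1)); (5,4,1,(Posz 1))]; [:: (7,5,4,(Negz 0)); (1,5,2,(Negz 0)); (4,5,2,(Posz 1)); (1,5,4,(Posz 1)); (7,5,1,(Posz 1))]; [:: (1,6,1,(Posz 1))]; [:: (3,7,1,(Posz 1))]; [:: (6,8,1,(Posz 1))]; [:: (7,9,1,(Posz 1))]; [:: (7,10,4,(Negz 0)); (6,10,4,(Posz 1)); (7,10,1,(Posz 1))]; [:: (4,11,1,(Posz 1)); (4,11,5,(Negz 0)); (5,11,5,(Posz 1))]]; [:: [::]; [::]; [::]; [::]; [:: (5,4,0,(Posz 1)); (3,4,4,(Posz 1)); (1,4,2,(Posz 1)); (3,4,0,(Negz 0)); (1,4,4,(Negz 0))]; [:: (4,5,2,(Posz 1))]; [:: (6,6,4,(Posz 1)); (1,6,2,(Posz 1)); (1,6,4,(Negz 0))]; [:: (2,7,2,(Posz 1))]; [::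 (4,8,2,(Posz 1))]; [:: (2,9,0,(Posz 1)); (5,9,2,(Posz 1)); (5,9,0,(Negz 0))]; [:: (7,10,2,(Posz 1))]; [:: (4,11,2,(Posz 1))]]; [:: [::]; [::]; [::]; [::]; [:: (3,4,3,(Posz 1))]; [:: (7,5,3,(Posz 1))]; [:: (1,6,1,(Posz 1)); (6,6,3,(Posz 1)); (6,6,1,(Negz 0))]; [:: (3,7,3,(Posz 1))]; [:: (6,8,3,(Posz 1))]; [:: (7,9,3,(Posz 1)); (7,9,0,(Negz 0)); (2,9,0,(Posz 1))]; [:: (3,10,3,(Posz 1))]; [:: (5,11,3,(Posz 1))]]; [:: [::]; [::]; [::]; [::]; [:: (5,4,0,(Posz 1)); (3,4,4,(Posz 1)); (3,4,0,(Negz 0))]; [:: (1,5,2,(Negz 0)); (4,5,2,(Posz 1)); (1,5,4,(Posz 1))]; [:: (6,6,4,(Posz 1))]; [:: (3,7,4,(Posz 1)); (3,7,0,(Negz 0)); (2,7,0,(Posz 1))]; [:: (6,8,4,(Posz 1))]; [:: (7,9,4,(Posz 1))]; [:: (6,10,4,(Posz 1))]; [:: (4,11,4,(Posz 1))]]; [:: [::]; [::]; [::]; [::]; [:: (5,4,5,(Posz 1))]; [:: (7,5,5,(Posz 1)); (4,5,2,(Posz 1)); (7,5,2,(Negz 0))]; [:: (1,6,5,(Posz 1))]; [:: (3,7,3,(Posz 1)); (2,7,5,(Posz 1)); (2,7,3,(Negz 0))]; [:: (6,8,3,(Posz 1)); (2,8,3,(Negz 0)); (2,8,5,(Posz 1))];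 [:: (7,9,3,(Posz 1)); (7,9,0,(Negz 0)); (2,9,0,(Posz 1)); (2,9,3,(Negz 0)); (2,9,5,(Posz 1))]; [:: (7,10,5,(Posz 1))]; [:: (5,11,5,(Posz 1))]]; [:: [::]; [::]; [::]; [::]; [:: (3,4,3,(Posz 1)); (1,4,3,(Negz 0)); (1,4,6,(Posz 1))]; [:: (7,5,3,(Posz 1)); (1,5,3,(Negz 0)); (1,5,6,(Posz 1))]; [:: (1,6,1,(Posz 1)); (6,6,3,(Posz 1)); (1,6,3,(Negz 0)); (6,6,1,(Negz 0)); (1,6,6,(Posz 1))]; [:: (3,7,4,(Posz 1)); (3,7,0,(Negz 0)); (2,7,4,(Negz 0)); (2,7,0,(Posz 1)); (2,7,6,(Posz 1))]; [:: (6,8,4,(Posz 1)); (2,8,4,(Negz 0)); (2,8,6,(Posz 1))]; [:: (7,9,4,(Posz 1)); (2,9,4,(Negz 0)); (2,9,6,(Posz 1))]; [:: (7,10,5,(Posz 1)); (3,10,5,(Negz 0)); (3,10,6,(Posz 1))]; [:: (5,11,2,(Negz 0)); (4,11,2,(Posz 1)); (5,11,0,(Posz 1)); (4,11,0,(Negz 0)); (4,11,6,(Posz 1))]]].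
Definition D2arr : seq (seq (seq (seq entry))) := [:: [::]; [:: [::]; [::]; [::]; [::]; [:: [::]; [::]; [::]; [::]; [:: (5,4,0,(Negz 0)); (3,4,4,(Negz 0)); (3,4,0,(Posz 1)); (1,4,4,(Posz 1))]; [:: (3,4,3,(Negz 0)); (1,4,3,(Posz 1))]; [:: (5,4,5,(Negz 0)); (1,4,5,(Posz 1))]]; [:: [::]; [::]; [::]; [::]; [:: (1,5,2,(Posz 1)); (4,5,2,(Negz 0))]; [:: (7,5,3,(Negz 0)); (1,5,3,(Posz 1))]; [:: (7,5,5,(Negz 0)); (4,5,2,(Negz 0)); (1,5,5,(Posz 1)); (7,5,2,(Posz 1))]]; [:: [::]; [::]; [::]; [::]; [:: (6,6,4,(Negz 0)); (1,6,4,(Posz 1))]; [:: (1,6,1,(Negz 0)); (6,6,3,(Negz 0)); (1,6,3,(Posz 1)); (6,6,1,(Posz 1))]]]; [:: [::]; [::]; [::]; [::]; [::]; [::]; [::]; [:: [::]; [::]; [::]; [::]; [::]; [::]; [::]; [::]; [:: (3,7,3,(Negz 0)); (2,7,3,(Posz 1))]; [:: (3,7,4,(Negz 0)); (3,7,0,(Posz 1)); (2,7,4,(Posz 1)); (2,7,0,(Negz 0))]]; [:: [::]; [::]; [::]; [::]; [::]; [::]; [::]; [:: (2,8,2,(Posz 1)); (4,8,2,(Negz 0))]; [:: (6,8,3,(Negz 0)); (2,8,3,(Posz 1))]; [:: (6,8,4,(Negz 0)); (2,8,4,(Posz 1))]]; [:: [::]; [::]; [::]; [::]; [::]; [::]; [::];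 [:: (2,9,0,(Negz 0)); (2,9,2,(Posz 1)); (5,9,2,(Negz 0)); (5,9,0,(Posz 1))]; [:: (7,9,3,(Negz 0)); (7,9,0,(Posz 1)); (2,9,0,(Negz 0)); (2,9,3,(Posz 1))]; [:: (7,9,4,(Negz 0)); (2,9,4,(Posz 1))]]]; [:: [::]; [::]; [::]; [::]; [:: [::]; [::]; [::]; [::]; [:: (5,4,0,(Negz 0)); (3,4,0,(Posz 1))]; [::]; [::]; [:: (3,4,3,(Negz 0)); (1,4,3,(Posz 1)); (5,4,6,(Posz 1)); (1,4,6,(Negz 0)); (5,4,1,(Negz 0)); (3,4,1,(Posz 1))]; [::]; [::]; [:: (3,4,3,(Negz 0)); (1,4,3,(Posz 1)); (1,4,6,(Negz 0)); (3,4,6,(Posz 1))]]; [::]; [::]; [:: [::]; [::]; [::]; [::]; [:: (3,7,0,(Posz 1)); (2,7,0,(Negz 0))]; [::]; [::]; [::]; [::]; [::]; [:: (3,7,3,(Negz 0)); (2,7,5,(Negz 0)); (2,7,3,(Posz 1)); (3,7,5,(Posz 1))]]; [::]; [::]; [:: [::]; [::]; [::]; [::]; [:: (7,10,3,(Posz 1)); (7,10,0,(Negz 0)); (3,10,0,(Posz 1)); (3,10,3,(Negz 0))]; [::]; [::]; [:: (7,10,4,(Posz 1)); (6,10,4,(Negz 0)); (7,10,1,(Negz 0)); (3,10,1,(Posz 1))]; [::]; [::]; [:: (7,10,5,(Negz 0)); (3,10,5,(Posz 1))]]]; [:: [::]; [::]; [::]; [::]; [::]; [:: [::]; [::]; [::];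 [::]; [::]; [:: (7,5,0,(Negz 0)); (4,5,0,(Posz 1))]; [::]; [::]; [:: (7,5,4,(Posz 1)); (1,5,2,(Posz 1)); (4,5,2,(Negz 0)); (1,5,4,(Negz 0)); (7,5,1,(Negz 0)); (4,5,1,(Posz 1))]; [::]; [::]; [:: (4,5,4,(Posz 1)); (1,5,2,(Posz 1)); (4,5,2,(Negz 0)); (1,5,4,(Negz 0))]]; [::]; [::]; [:: [::]; [::]; [::]; [::]; [::]; [:: (2,8,0,(Negz 0)); (4,8,0,(Posz 1))]; [::]; [::]; [:: (6,8,1,(Negz 0)); (4,8,1,(Posz 1))]; [::]; [::]; [:: (6,8,4,(Negz 0)); (4,8,4,(Posz 1))]]; [::]; [::]; [:: [::]; [::]; [::]; [::]; [::]; [:: (5,11,2,(Posz 1)); (4,11,2,(Negz 0)); (5,11,0,(Negz 0)); (4,11,0,(Posz 1))]; [::]; [::]; [:: (4,11,5,(Posz 1)); (5,11,5,(Negz 0))]]]; [:: [::]; [::]; [::]; [::]; [:: [::]; [::]; [::]; [::]; [::]; [::]; [::]; [::]; [::]; [:: (3,4,3,(Negz 0)); (1,4,3,(Posz 1)); (5,4,6,(Posz 1)); (1,4,6,(Negz 0))]; [::]; [:: (3,4,3,(Negz 0)); (5,4,3,(Posz 1))]]; [::]; [::]; [::]; [::]; [:: [::]; [::]; [::]; [::]; [:: (2,9,0,(Negz 0)); (5,9,0,(Posz 1))]; [::]; [::]; [::]; [::]; [:: (7,9,1,(Negz 0)); (5,9,1,(Posz 1))]; [::]; [:: (5,9,3,(Posz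 1)); (7,9,3,(Negz 0)); (7,9,0,(Posz 1)); (2,9,0,(Negz 0))]]; [::]; [:: [::]; [::]; [::]; [::]; [:: (5,11,2,(Posz 1)); (4,11,2,(Negz 0))]; [::]; [::]; [::]; [::]; [:: (4,11,1,(Negz 0)); (4,11,5,(Posz 1)); (5,11,1,(Posz 1)); (5,11,5,(Negz 0))]]]; [:: [::]; [::]; [::]; [::]; [::]; [::]; [:: [::]; [::]; [::]; [::]; [::]; [::]; [::]; [::]; [:: (1,6,1,(Negz 0)); (6,6,1,(Posz 1))]; [::]; [:: (6,6,2,(Posz 1)); (6,6,4,(Negz 0)); (1,6,2,(Negz 0)); (1,6,4,(Posz 1))]]; [::]; [:: [::]; [::]; [::]; [::]; [::]; [::]; [:: (6,8,0,(Posz 1)); (2,8,0,(Negz 0))]; [::]; [::]; [::]; [:: (6,8,4,(Negz 0)); (2,8,4,(Posz 1)); (6,8,6,(Posz 1)); (2,8,6,(Negz 0))]]; [::]; [:: [::]; [::]; [::]; [::]; [::]; [::]; [:: (7,10,3,(Posz 1)); (7,10,0,(Negz 0)); (3,10,3,(Negz 0)); (6,10,0,(Posz 1))]; [::]; [:: (6,10,3,(Posz 1)); (3,10,3,(Negz 0))]; [::]; [:: (6,10,2,(Posz 1)); (7,10,2,(Negz 0))]]]; [:: [::]; [::]; [::]; [::]; [::]; [:: [::]; [::]; [::]; [::]; [::]; [::]; [::]; [::]; [::]; [:: (7,5,4,(Posz 1)); (1,5,2,(Posz 1)); (4,5,2,(Negz 0)); (1,5,4,(Negz 0))]; [:: (4,5,2,(Negz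 0)); (7,5,2,(Posz 1))]]; [::]; [::]; [::]; [:: [::]; [::]; [::]; [::]; [::]; [:: (7,9,0,(Posz 1)); (2,9,0,(Negz 0))]; [::]; [::]; [::]; [::]; [:: (7,9,5,(Posz 1)); (7,9,3,(Negz 0)); (7,9,0,(Posz 1)); (2,9,0,(Negz 0)); (2,9,3,(Posz 1)); (2,9,5,(Negz 0))]]; [:: [::]; [::]; [::]; [::]; [::]; [:: (7,10,3,(Posz 1)); (3,10,3,(Negz 0))]; [::]; [::]; [::]; [:: (7,10,4,(Posz 1)); (6,10,4,(Negz 0))]]]].
Definition Carr : seq (seq (seq (seq (nat * int)))) := [:: [::]; [:: [::]; [::]; [::]; [::]; [:: [::]; [:: (1,(Posz 1)); (2,(Posz 1))]]; [:: [::]; [:: (4,(Negz 0))]]]; [::]; [:: [::]; [::]; [::]; [::]; [:: [::]; [::]; [::]; [::]; [::]; [:: (1,(Negz 0))]]; [::]; [::]; [:: [::]; [::]; [::]; [::]; [::]; [::]; [:: (7,(Posz 1))]]; [::]; [::]; [:: [::]; [::]; [::]; [::]; [:: (15,(Negz 0))]]]; [:: [::]; [::]; [::]; [::]; [::]; [:: [::]; [::]; [::]; [::]; [::]; [:: (4,(Posz 1)); (5,(Negz 0))]; [:: (3,(Negz 0))]]; [::]; [::]; [:: [::]; [::]; [::]; [::]; [::]; [:: (8,(Negz 0))]; [:: (9,(Posz 1)); (10,(Negz 0))]]]; [:: [::]; [::]; [::]; [::]; [:: [::]; [::]; [:: (0,(Negz 0))]]; [::]; [::]; [::]; [::]; [::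 [::]; [::]; [::]; [::]; [::]; [:: (13,(Negz 0))]; [:: (11,(Negz 0))]]; [::]; [:: [::]; [::]; [::]; [::]; [::]; [::]; [:: (17,(Posz 1))]]]; [:: [::]; [::]; [::]; [::]; [::]; [::]; [:: [::]; [::]; [::]; [::]; [::]; [::]; [:: (6,(Negz 0))]]; [::]; [:: [::]; [::]; [:: (10,(Posz 1))]]; [::]; [:: [::]; [:: (16,(Posz 1))]; [::]; [::]; [::]; [::]; [:: (14,(Posz 1))]]]; [:: [::]; [::]; [::]; [::]; [::]; [::]; [::]; [::]; [::]; [:: [::]; [::]; [:: (12,(Posz 1)); (13,(Posz 1))]]]].
Definition G0arr : seq (seq (seq (seq (seq entry)))) := [::].
Definition G1arr : seq (seq (seq (seq (seq entry)))) := [:: [::]; [:: [::]; [::]; [::]; [::]; [:: [::]; [::]; [::]; [:: [::]; [::]; [::]; [::]; [:: (0,3,4,(Negz 0))]]; [::]; [:: [::]; [::]; [::]; [::]; [:: (0,5,4,(Negz 0))]]]; [:: [::]; [::]; [::]; [::]; [:: [::]; [::]; [::]; [::]; [::]; [:: (0,4,5,(Negz 0))]]; [::]; [::]; [:: [::]; [::]; [::]; [::]; [::]; [:: (0,7,5,(Negz 0))]]]; [:: [::]; [::]; [::]; [::]; [::]; [::]; [:: [::]; [::]; [::]; [::]; [::]; [::]; [:: (0,6,6,(Negz 0))]]]; [:: [::]; [::]; [::]; [:: [::]; [::]; [::]; [::]; [::]; [::]; [::]; [:: (0,3,7,(Negz 0))]]]; [:: [::]; [::]; [::]; [::]; [::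 [::]; [::]; [::]; [::]; [::]; [::]; [::]; [::]; [:: (0,4,8,(Negz 0))]]; [::]; [:: [::]; [::]; [::]; [::]; [::]; [::]; [::]; [::]; [:: (0,6,8,(Negz 0))]]]; [:: [::]; [::]; [::]; [::]; [::]; [:: [::]; [::]; [::]; [::]; [::]; [::]; [::]; [::]; [::]; [:: (0,5,9,(Negz 0))]]; [::]; [:: [::]; [::]; [::]; [::]; [::]; [::]; [::]; [::]; [::]; [:: (0,7,9,(Negz 0))]]]; [:: [::]; [::]; [::]; [::]; [::]; [::]; [:: [::]; [::]; [::]; [::]; [::]; [::]; [::]; [::]; [::]; [::]; [:: (0,6,10,(Negz 0))]]; [:: [::]; [::]; [::]; [::]; [::]; [::]; [::]; [::]; [::]; [::]; [:: (0,7,10,(Negz 0))]]]; [:: [::]; [::]; [::]; [::]; [::]; [:: [::]; [::]; [::]; [::]; [::]; [::]; [::]; [::]; [::]; [::]; [::]; [:: (0,5,11,(Negz 0))]]]]; [:: [::]; [::]; [::]; [::]; [:: [::]; [::]; [::]; [:: [::]; [::]; [::]; [::]; [:: (1,3,4,(Negz 0))]]; [::]; [:: [::]; [::]; [::]; [::]; [:: (1,5,4,(Negz 0))]]]; [:: [::]; [::]; [::]; [::]; [:: [::]; [::]; [::]; [::]; [::]; [:: (1,4,5,(Negz 0))]]; [::]; [::]; [:: [::]; [::]; [::]; [::]; [::]; [:: (1,7,5,(Negz 0))]]]; [:: [::]; [::]; [::]; [::]; [::]; [::]; [:: [::]; [::]; [::]; [::]; [::]; [::]; [:: (1,6,6,(Negz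 0))]]]; [:: [::]; [::]; [::]; [:: [::]; [::]; [::]; [::]; [::]; [::]; [::]; [:: (1,3,7,(Negz 0))]]]; [:: [::]; [::]; [::]; [::]; [:: [::]; [::]; [::]; [::]; [::]; [::]; [::]; [::]; [:: (1,4,8,(Negz 0))]]; [::]; [:: [::]; [::]; [::]; [::]; [::]; [::]; [::]; [::]; [:: (1,6,8,(Negz 0))]]]; [:: [::]; [::]; [::]; [::]; [::]; [:: [::]; [::]; [::]; [::]; [::]; [::]; [::]; [::]; [::]; [:: (1,5,9,(Negz 0))]]; [::]; [:: [::]; [::]; [::]; [::]; [::]; [::]; [::]; [::]; [::]; [:: (1,7,9,(Negz 0))]]]; [:: [::]; [::]; [::]; [::]; [::]; [::]; [:: [::]; [::]; [::]; [::]; [::]; [::]; [::]; [::]; [::]; [::]; [:: (1,6,10,(Negz 0))]]; [:: [::]; [::]; [::]; [::]; [::]; [::]; [::]; [::]; [::]; [::]; [:: (1,7,10,(Negz 0))]]]; [:: [::]; [::]; [::]; [::]; [::]; [:: [::]; [::]; [::]; [::]; [::]; [::]; [::]; [::]; [::]; [::]; [::]; [:: (1,5,11,(Negz 0))]]]]; [:: [::]; [::]; [::]; [::]; [:: [::]; [::]; [::]; [:: [::]; [::]; [::]; [::]; [:: (2,3,4,(Negz 0))]]; [::]; [:: [::]; [::]; [::]; [::]; [:: (2,5,4,(Negz 0))]]]; [:: [::]; [::]; [::]; [::]; [:: [::]; [::]; [::]; [::]; [::]; [:: (2,4,5,(Negz 0))]]; [::]; [::]; [:: [::]; [::]; [::];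 [::]; [::]; [:: (2,7,5,(Negz 0))]]]; [:: [::]; [::]; [::]; [::]; [::]; [::]; [:: [::]; [::]; [::]; [::]; [::]; [::]; [:: (2,6,6,(Negz 0))]]]; [:: [::]; [::]; [::]; [:: [::]; [::]; [::]; [::]; [::]; [::]; [::]; [:: (2,3,7,(Negz 0))]]]; [:: [::]; [::]; [::]; [::]; [:: [::]; [::]; [::]; [::]; [::]; [::]; [::]; [::]; [:: (2,4,8,(Negz 0))]]; [::]; [:: [::]; [::]; [::]; [::]; [::]; [::]; [::]; [::]; [:: (2,6,8,(Negz 0))]]]; [:: [::]; [::]; [::]; [::]; [::]; [:: [::]; [::]; [::]; [::]; [::]; [::]; [::]; [::]; [::]; [:: (2,5,9,(Negz 0))]]; [::]; [:: [::]; [::]; [::]; [::]; [::]; [::]; [::]; [::]; [::]; [:: (2,7,9,(Negz 0))]]]; [:: [::]; [::]; [::]; [::]; [::]; [::]; [:: [::]; [::]; [::]; [::]; [::]; [::]; [::]; [::]; [::]; [::]; [:: (2,6,10,(Negz 0))]]; [:: [::]; [::]; [::]; [::]; [::]; [::]; [::]; [::]; [::]; [::]; [:: (2,7,10,(Negz 0))]]]; [:: [::]; [::]; [::]; [::]; [::]; [:: [::]; [::]; [::]; [::]; [::]; [::]; [::]; [::]; [::]; [::]; [::]; [:: (2,5,11,(Negz 0))]]]]; [:: [::]; [::]; [::]; [::]; [:: [::]; [::]; [::]; [:: [::]; [::]; [::]; [::]; [:: (3,3,4,(Negz 0))]]; [::]; [:: [::]; [::]; [::]; [::]; [:: (3,5,4,(Negz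 0))]]]; [:: [::]; [::]; [::]; [::]; [:: [::]; [::]; [::]; [::]; [::]; [:: (3,4,5,(Negz 0))]]; [::]; [::]; [:: [::]; [::]; [::]; [::]; [::]; [:: (3,7,5,(Negz 0))]]]; [:: [::]; [::]; [::]; [::]; [::]; [::]; [:: [::]; [::]; [::]; [::]; [::]; [::]; [:: (3,6,6,(Negz 0))]]]; [:: [::]; [::]; [::]; [:: [::]; [::]; [::]; [::]; [::]; [::]; [::]; [:: (3,3,7,(Negz 0))]]]; [:: [::]; [::]; [::]; [::]; [:: [::]; [::]; [::]; [::]; [::]; [::]; [::]; [::]; [:: (3,4,8,(Negz 0))]]; [::]; [:: [::]; [::]; [::]; [::]; [::]; [::]; [::]; [::]; [:: (3,6,8,(Negz 0))]]]; [:: [::]; [::]; [::]; [::]; [::]; [:: [::]; [::]; [::]; [::]; [::]; [::]; [::]; [::]; [::]; [:: (3,5,9,(Negz 0))]]; [::]; [:: [::]; [::]; [::]; [::]; [::]; [::]; [::]; [::]; [::]; [:: (3,7,9,(Negz 0))]]]; [:: [::]; [::]; [::]; [::]; [::]; [::]; [:: [::]; [::]; [::]; [::]; [::]; [::]; [::]; [::]; [::]; [::]; [:: (3,6,10,(Negz 0))]]; [:: [::]; [::]; [::]; [::]; [::]; [::]; [::]; [::]; [::]; [::]; [:: (3,7,10,(Negz 0))]]]; [:: [::]; [::]; [::]; [::]; [::]; [:: [::]; [::]; [::]; [::]; [::]; [::]; [::]; [::]; [::]; [::]; [::]; [:: (3,5,11,(Negz 0))]]]]; [:: [::]; [::]; [::];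 [::]; [:: [::]; [::]; [::]; [:: [::]; [::]; [::]; [::]; [:: (4,3,4,(Negz 0))]]; [::]; [:: [::]; [::]; [::]; [::]; [:: (4,5,4,(Negz 0))]]]; [:: [::]; [::]; [::]; [::]; [:: [::]; [::]; [::]; [::]; [::]; [:: (4,4,5,(Negz 0))]]; [::]; [::]; [:: [::]; [::]; [::]; [::]; [::]; [:: (4,7,5,(Negz 0))]]]; [:: [::]; [::]; [::]; [::]; [::]; [::]; [:: [::]; [::]; [::]; [::]; [::]; [::]; [:: (4,6,6,(Negz 0))]]]; [:: [::]; [::]; [::]; [:: [::]; [::]; [::]; [::]; [::]; [::]; [::]; [:: (4,3,7,(Negz 0))]]]; [:: [::]; [::]; [::]; [::]; [:: [::]; [::]; [::]; [::]; [::]; [::]; [::]; [::]; [:: (4,4,8,(Negz 0))]]; [::]; [:: [::]; [::]; [::]; [::]; [::]; [::]; [::]; [::]; [:: (4,6,8,(Negz 0))]]]; [:: [::]; [::]; [::]; [::]; [::]; [:: [::]; [::]; [::]; [::]; [::]; [::]; [::]; [::]; [::]; [:: (4,5,9,(Negz 0))]]; [::]; [:: [::]; [::]; [::]; [::]; [::]; [::]; [::]; [::]; [::]; [:: (4,7,9,(Negz 0))]]]; [:: [::]; [::]; [::]; [::]; [::]; [::]; [:: [::]; [::]; [::]; [::]; [::]; [::]; [::]; [::]; [::]; [::]; [:: (4,6,10,(Negz 0))]]; [:: [::]; [::]; [::]; [::]; [::]; [::]; [::]; [::]; [::]; [::]; [:: (4,7,10,(Negz 0))]]]; [:: [::]; [::];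 [::]; [::]; [::]; [:: [::]; [::]; [::]; [::]; [::]; [::]; [::]; [::]; [::]; [::]; [::]; [:: (4,5,11,(Negz 0))]]]]; [:: [::]; [::]; [::]; [::]; [:: [::]; [::]; [::]; [:: [::]; [::]; [::]; [::]; [:: (5,3,4,(Negz 0))]]; [::]; [:: [::]; [::]; [::]; [::]; [:: (5,5,4,(Negz 0))]]]; [:: [::]; [::]; [::]; [::]; [:: [::]; [::]; [::]; [::]; [::]; [:: (5,4,5,(Negz 0))]]; [::]; [::]; [:: [::]; [::]; [::]; [::]; [::]; [:: (5,7,5,(Negz 0))]]]; [:: [::]; [::]; [::]; [::]; [::]; [::]; [:: [::]; [::]; [::]; [::]; [::]; [::]; [:: (5,6,6,(Negz 0))]]]; [:: [::]; [::]; [::]; [:: [::]; [::]; [::]; [::]; [::]; [::]; [::]; [:: (5,3,7,(Negz 0))]]]; [:: [::]; [::]; [::]; [::]; [:: [::]; [::]; [::]; [::]; [::]; [::]; [::]; [::]; [:: (5,4,8,(Negz 0))]]; [::]; [:: [::]; [::]; [::]; [::]; [::]; [::]; [::]; [::]; [:: (5,6,8,(Negz 0))]]]; [:: [::]; [::]; [::]; [::]; [::]; [:: [::]; [::]; [::]; [::]; [::]; [::]; [::]; [::]; [::]; [:: (5,5,9,(Negz 0))]]; [::]; [:: [::]; [::]; [::]; [::]; [::]; [::]; [::]; [::]; [::]; [:: (5,7,9,(Negz 0))]]]; [:: [::]; [::]; [::]; [::]; [::]; [::]; [:: [::]; [::]; [::]; [::]; [::]; [::]; [::]; [::]; [::];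 [::]; [:: (5,6,10,(Negz 0))]]; [:: [::]; [::]; [::]; [::]; [::]; [::]; [::]; [::]; [::]; [::]; [:: (5,7,10,(Negz 0))]]]; [:: [::]; [::]; [::]; [::]; [::]; [:: [::]; [::]; [::]; [::]; [::]; [::]; [::]; [::]; [::]; [::]; [::]; [:: (5,5,11,(Negz 0))]]]]; [:: [::]; [::]; [::]; [::]; [:: [::]; [::]; [::]; [:: [::]; [::]; [::]; [::]; [:: (6,3,4,(Negz 0))]]; [::]; [:: [::]; [::]; [::]; [::]; [:: (6,5,4,(Negz 0))]]]; [:: [::]; [::]; [::]; [::]; [:: [::]; [::]; [::]; [::]; [::]; [:: (6,4,5,(Negz 0))]]; [::]; [::]; [:: [::]; [::]; [::]; [::]; [::]; [:: (6,7,5,(Negz 0))]]]; [:: [::]; [::]; [::]; [::]; [::]; [::]; [:: [::]; [::]; [::]; [::]; [::]; [::]; [:: (6,6,6,(Negz 0))]]]; [:: [::]; [::]; [::]; [:: [::]; [::]; [::]; [::]; [::]; [::]; [::]; [:: (6,3,7,(Negz 0))]]]; [:: [::]; [::]; [::]; [::]; [:: [::]; [::]; [::]; [::]; [::]; [::]; [::]; [::]; [:: (6,4,8,(Negz 0))]]; [::]; [:: [::]; [::]; [::]; [::]; [::]; [::]; [::]; [::]; [:: (6,6,8,(Negz 0))]]]; [:: [::]; [::]; [::]; [::]; [::]; [:: [::]; [::]; [::]; [::]; [::]; [::]; [::]; [::]; [::]; [:: (6,5,9,(Negz 0))]]; [::]; [:: [::]; [::]; [::]; [::]; [::]; [::];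 [::]; [::]; [::]; [:: (6,7,9,(Negz 0))]]]; [:: [::]; [::]; [::]; [::]; [::]; [::]; [:: [::]; [::]; [::]; [::]; [::]; [::]; [::]; [::]; [::]; [::]; [:: (6,6,10,(Negz 0))]]; [:: [::]; [::]; [::]; [::]; [::]; [::]; [::]; [::]; [::]; [::]; [:: (6,7,10,(Negz 0))]]]; [:: [::]; [::]; [::]; [::]; [::]; [:: [::]; [::]; [::]; [::]; [::]; [::]; [::]; [::]; [::]; [::]; [::]; [:: (6,5,11,(Negz 0))]]]]].
Definition G2arr : seq (seq (seq (seq (seq (seq entry))))) := [:: [::]; [:: [::]; [::]; [::]; [::]; [:: [::]; [::]; [::]; [::]; [:: [::]; [::]; [::]; [:: [::]; [::]; [::]; [::]; [:: (2,3,4,(Negz 0)); (2,5,4,(Negz 0))]]; [::]; [:: [::]; [::]; [::]; [::]; [:: (4,3,4,(Negz 0)); (4,5,4,(Negz 0))]]]; [:: [::]; [::]; [::]; [:: [::]; [::]; [::]; [::]; [:: (2,4,5,(Negz 0)); (2,7,5,(Negz 0))]]; [::]; [:: [::]; [::]; [::]; [::]; [:: (4,4,5,(Negz 0)); (4,7,5,(Negz 0))]]]; [:: [::]; [::]; [::]; [:: [::]; [::]; [::]; [::]; [:: (2,6,6,(Negz 0))]]; [::]; [:: [::]; [::]; [::]; [::]; [:: (4,6,6,(Negz 0))]]]]; [:: [::]; [::]; [::]; [::]; [:: [::]; [::]; [::]; [::]; [:: [::]; [::]; [::]; [::]; [::]; [:: (3,3,4,(Negz 0)); (3,5,4,(Negz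 0))]]; [::]; [::]; [:: [::]; [::]; [::]; [::]; [::]; [:: (6,3,4,(Negz 0)); (6,5,4,(Negz 0))]]]; [:: [::]; [::]; [::]; [::]; [:: [::]; [::]; [::]; [::]; [::]; [:: (3,4,5,(Negz 0)); (3,7,5,(Negz 0))]]; [::]; [::]; [:: [::]; [::]; [::]; [::]; [::]; [:: (6,4,5,(Negz 0)); (6,7,5,(Negz 0))]]]; [:: [::]; [::]; [::]; [::]; [:: [::]; [::]; [::]; [::]; [::]; [:: (3,6,6,(Negz 0))]]; [::]; [::]; [:: [::]; [::]; [::]; [::]; [::]; [:: (6,6,6,(Negz 0))]]]]; [:: [::]; [::]; [::]; [::]; [:: [::]; [::]; [::]; [::]; [::]; [::]; [:: [::]; [::]; [::]; [::]; [::]; [::]; [:: (5,3,4,(Negz 0)); (5,5,4,(Negz 0))]]]; [:: [::]; [::]; [::]; [::]; [::]; [::]; [:: [::]; [::]; [::]; [::]; [::]; [::]; [:: (5,4,5,(Negz 0)); (5,7,5,(Negz 0))]]]; [:: [::]; [::]; [::]; [::]; [::]; [::]; [:: [::]; [::]; [::]; [::]; [::]; [::]; [:: (5,6,6,(Negz 0))]]]]]; [:: [::]; [::]; [::]; [::]; [::]; [::]; [::]; [:: [::]; [::]; [::]; [::]; [::]; [::]; [::]; [:: [::]; [::]; [::]; [:: [::]; [::]; [::]; [::]; [::]; [::]; [::]; [:: (2,3,7,(Negz 0))]]]; [:: [::]; [::]; [::]; [:: [::]; [::]; [::]; [::]; [::]; [::]; [::]; [:: (2,4,8,(Negz 0));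 (2,6,8,(Negz 0))]]]; [:: [::]; [::]; [::]; [:: [::]; [::]; [::]; [::]; [::]; [::]; [::]; [:: (2,5,9,(Negz 0)); (2,7,9,(Negz 0))]]]]; [:: [::]; [::]; [::]; [::]; [::]; [::]; [::]; [:: [::]; [::]; [::]; [::]; [:: [::]; [::]; [::]; [::]; [::]; [::]; [::]; [::]; [:: (3,3,7,(Negz 0))]]; [::]; [:: [::]; [::]; [::]; [::]; [::]; [::]; [::]; [::]; [:: (5,3,7,(Negz 0))]]]; [:: [::]; [::]; [::]; [::]; [:: [::]; [::]; [::]; [::]; [::]; [::]; [::]; [::]; [:: (3,4,8,(Negz 0)); (3,6,8,(Negz 0))]]; [::]; [:: [::]; [::]; [::]; [::]; [::]; [::]; [::]; [::]; [:: (5,4,8,(Negz 0)); (5,6,8,(Negz 0))]]]; [:: [::]; [::]; [::]; [::]; [:: [::]; [::]; [::]; [::]; [::]; [::]; [::]; [::]; [:: (3,5,9,(Negz 0)); (3,7,9,(Negz 0))]]; [::]; [:: [::]; [::]; [::]; [::]; [::]; [::]; [::]; [::]; [:: (5,5,9,(Negz 0)); (5,7,9,(Negz 0))]]]]; [:: [::]; [::]; [::]; [::]; [::]; [::]; [::]; [:: [::]; [::]; [::]; [::]; [::]; [:: [::]; [::]; [::]; [::]; [::]; [::]; [::]; [::]; [::]; [:: (4,3,7,(Negz 0))]]; [::]; [:: [::]; [::]; [::]; [::]; [::]; [::]; [::]; [::]; [::]; [:: (6,3,7,(Negz 0))]]]; [:: [::]; [::]; [::]; [::]; [::]; [:: [::];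 [::]; [::]; [::]; [::]; [::]; [::]; [::]; [::]; [:: (4,4,8,(Negz 0)); (4,6,8,(Negz 0))]]; [::]; [:: [::]; [::]; [::]; [::]; [::]; [::]; [::]; [::]; [::]; [:: (6,4,8,(Negz 0)); (6,6,8,(Negz 0))]]]; [:: [::]; [::]; [::]; [::]; [::]; [:: [::]; [::]; [::]; [::]; [::]; [::]; [::]; [::]; [::]; [:: (4,5,9,(Negz 0)); (4,7,9,(Negz 0))]]; [::]; [:: [::]; [::]; [::]; [::]; [::]; [::]; [::]; [::]; [::]; [:: (6,5,9,(Negz 0)); (6,7,9,(Negz 0))]]]]]; [:: [::]; [::]; [::]; [::]; [:: [::]; [::]; [::]; [::]; [:: [::]; [::]; [::]; [:: [::]; [::]; [::]; [::]; [:: (0,3,4,(Negz 0)); (4,3,4,(Negz 0))]]; [::]; [:: [::]; [::]; [::]; [::]; [:: (4,3,4,(Posz 1))]]]; [::]; [::]; [:: [::]; [::]; [::]; [:: [::]; [::]; [::]; [::]; [:: (0,3,7,(Negz 0)); (4,3,7,(Negz 0))]]; [::]; [:: [::]; [::]; [::]; [::]; [:: (4,3,7,(Posz 1))]]]; [::]; [::]; [:: [::]; [::]; [::]; [:: [::]; [::]; [::]; [::]; [:: (0,6,10,(Posz 1)); (0,7,10,(Posz 1)); (4,6,10,(Posz 1)); (4,7,10,(Posz 1))]]; [::]; [:: [::]; [::]; [::]; [::]; [:: (4,6,10,(Negz 0)); (4,7,10,(Negz 0))]]]]; [::]; [::]; [:: [::]; [::]; [::]; [::]; [:: [::]; [::];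 [::]; [:: [::]; [::]; [::]; [::]; [::]; [::]; [::]; [:: (1,3,4,(Negz 0))]]]; [::]; [::]; [:: [::]; [::]; [::]; [:: [::]; [::]; [::]; [::]; [::]; [::]; [::]; [:: (1,3,7,(Negz 0))]]]; [::]; [::]; [:: [::]; [::]; [::]; [:: [::]; [::]; [::]; [::]; [::]; [::]; [::]; [:: (1,6,10,(Posz 1)); (1,7,10,(Posz 1))]]]]; [::]; [::]; [:: [::]; [::]; [::]; [::]; [:: [::]; [::]; [::]; [::]; [::]; [::]; [:: [::]; [::]; [::]; [::]; [::]; [::]; [::]; [::]; [::]; [::]; [:: (5,3,4,(Posz 1))]]; [:: [::]; [::]; [::]; [::]; [::]; [::]; [::]; [::]; [::]; [::]; [:: (6,3,4,(Posz 1))]]]; [::]; [::]; [:: [::]; [::]; [::]; [::]; [::]; [::]; [:: [::]; [::]; [::]; [::]; [::]; [::]; [::]; [::]; [::]; [::]; [:: (5,3,7,(Posz 1))]]; [:: [::]; [::]; [::]; [::]; [::]; [::]; [::]; [::]; [::]; [::]; [:: (6,3,7,(Posz 1))]]]; [::]; [::]; [:: [::]; [::]; [::]; [::]; [::]; [::]; [:: [::]; [::]; [::]; [::]; [::]; [::]; [::]; [::]; [::]; [::]; [:: (5,6,10,(Negz 0)); (5,7,10,(Negz 0))]]; [:: [::]; [::]; [::]; [::]; [::]; [::]; [::]; [::]; [::]; [::]; [:: (6,6,10,(Negz 0)); (6,7,10,(Negz 0))]]]]]; [:: [::]; [::]; [::]; [::]; [::]; [:: [::]; [::]; [::]; [::];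 [::]; [:: [::]; [::]; [::]; [::]; [:: [::]; [::]; [::]; [::]; [::]; [:: (0,4,5,(Negz 0)); (6,4,5,(Negz 0))]]; [::]; [::]; [:: [::]; [::]; [::]; [::]; [::]; [:: (6,4,5,(Posz 1))]]]; [::]; [::]; [:: [::]; [::]; [::]; [::]; [:: [::]; [::]; [::]; [::]; [::]; [:: (0,4,8,(Negz 0)); (6,4,8,(Negz 0))]]; [::]; [::]; [:: [::]; [::]; [::]; [::]; [::]; [:: (6,4,8,(Posz 1))]]]; [::]; [::]; [:: [::]; [::]; [::]; [::]; [:: [::]; [::]; [::]; [::]; [::]; [:: (0,5,11,(Posz 1)); (6,5,11,(Posz 1))]]; [::]; [::]; [:: [::]; [::]; [::]; [::]; [::]; [:: (6,5,11,(Negz 0))]]]]; [::]; [::]; [:: [::]; [::]; [::]; [::]; [::]; [:: [::]; [::]; [::]; [::]; [:: [::]; [::]; [::]; [::]; [::]; [::]; [::]; [::]; [:: (1,4,5,(Negz 0)); (5,4,5,(Negz 0))]]; [::]; [:: [::]; [::]; [::]; [::]; [::]; [::]; [::]; [::]; [:: (5,4,5,(Posz 1))]]]; [::]; [::]; [:: [::]; [::]; [::]; [::]; [:: [::]; [::]; [::]; [::]; [::]; [::]; [::]; [::]; [:: (1,4,8,(Negz 0)); (5,4,8,(Negz 0))]]; [::]; [:: [::]; [::]; [::]; [::]; [::]; [::]; [::]; [::]; [:: (5,4,8,(Posz 1))]]]; [::]; [::]; [:: [::]; [::]; [::]; [::]; [:: [::]; [::]; [::]; [::]; [::]; [::]; [::];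 [::]; [:: (1,5,11,(Posz 1)); (5,5,11,(Posz 1))]]; [::]; [:: [::]; [::]; [::]; [::]; [::]; [::]; [::]; [::]; [:: (5,5,11,(Negz 0))]]]]; [::]; [::]; [:: [::]; [::]; [::]; [::]; [::]; [:: [::]; [::]; [::]; [::]; [::]; [:: [::]; [::]; [::]; [::]; [::]; [::]; [::]; [::]; [::]; [::]; [::]; [:: (4,4,5,(Posz 1))]]]; [::]; [::]; [:: [::]; [::]; [::]; [::]; [::]; [:: [::]; [::]; [::]; [::]; [::]; [::]; [::]; [::]; [::]; [::]; [::]; [:: (4,4,8,(Posz 1))]]]; [::]; [::]; [:: [::]; [::]; [::]; [::]; [::]; [:: [::]; [::]; [::]; [::]; [::]; [::]; [::]; [::]; [::]; [::]; [::]; [:: (4,5,11,(Negz 0))]]]]]; [:: [::]; [::]; [::]; [::]; [:: [::]; [::]; [::]; [::]; [:: [::]; [::]; [::]; [:: [::]; [::]; [::]; [::]; [:: (2,5,4,(Posz 1))]]; [::]; [:: [::]; [::]; [::]; [::]; [:: (0,5,4,(Negz 0)); (2,5,4,(Negz 0))]]]; [::]; [::]; [::]; [::]; [:: [::]; [::]; [::]; [:: [::]; [::]; [::]; [::]; [:: (2,5,9,(Posz 1))]]; [::]; [:: [::]; [::]; [::]; [::]; [:: (0,5,9,(Negz 0)); (2,5,9,(Negz 0))]]]; [::]; [:: [::]; [::]; [::]; [:: [::]; [::]; [::]; [::]; [:: (2,5,11,(Posz 1))]]; [::]; [:: [::]; [::]; [::]; [::]; [:: (0,5,11,(Negz 0));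 (2,5,11,(Negz 0))]]]]; [::]; [::]; [::]; [::]; [:: [::]; [::]; [::]; [::]; [:: [::]; [::]; [::]; [::]; [::]; [:: [::]; [::]; [::]; [::]; [::]; [::]; [::]; [::]; [::]; [:: (1,5,4,(Negz 0)); (6,5,4,(Negz 0))]]; [::]; [:: [::]; [::]; [::]; [::]; [::]; [::]; [::]; [::]; [::]; [:: (6,5,4,(Posz 1))]]]; [::]; [::]; [::]; [::]; [:: [::]; [::]; [::]; [::]; [::]; [:: [::]; [::]; [::]; [::]; [::]; [::]; [::]; [::]; [::]; [:: (1,5,9,(Negz 0)); (6,5,9,(Negz 0))]]; [::]; [:: [::]; [::]; [::]; [::]; [::]; [::]; [::]; [::]; [::]; [:: (6,5,9,(Posz 1))]]]; [::]; [:: [::]; [::]; [::]; [::]; [::]; [:: [::]; [::]; [::]; [::]; [::]; [::]; [::]; [::]; [::]; [:: (1,5,11,(Negz 0)); (6,5,11,(Negz 0))]]; [::]; [:: [::]; [::]; [::]; [::]; [::]; [::]; [::]; [::]; [::]; [:: (6,5,11,(Posz 1))]]]]; [::]; [:: [::]; [::]; [::]; [::]; [:: [::]; [::]; [::]; [::]; [::]; [:: [::]; [::]; [::]; [::]; [::]; [::]; [::]; [::]; [::]; [::]; [::]; [:: (3,5,4,(Negz 0))]]]; [::]; [::]; [::]; [::]; [:: [::]; [::]; [::]; [::]; [::]; [:: [::]; [::]; [::]; [::]; [::]; [::]; [::]; [::]; [::]; [::]; [::]; [:: (3,5,9,(Negz 0))]]]; [::]; [:: [::]; [::]; [::]; [::];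 [::]; [:: [::]; [::]; [::]; [::]; [::]; [::]; [::]; [::]; [::]; [::]; [::]; [:: (3,5,11,(Negz 0))]]]]]; [:: [::]; [::]; [::]; [::]; [::]; [::]; [:: [::]; [::]; [::]; [::]; [::]; [::]; [:: [::]; [::]; [::]; [::]; [::]; [::]; [:: [::]; [::]; [::]; [::]; [::]; [::]; [:: (0,6,6,(Negz 0))]]]; [::]; [:: [::]; [::]; [::]; [::]; [::]; [::]; [:: [::]; [::]; [::]; [::]; [::]; [::]; [:: (0,6,8,(Negz 0))]]]; [::]; [:: [::]; [::]; [::]; [::]; [::]; [::]; [:: [::]; [::]; [::]; [::]; [::]; [::]; [:: (0,6,10,(Negz 0))]]]]; [::]; [:: [::]; [::]; [::]; [::]; [::]; [::]; [:: [::]; [::]; [::]; [::]; [:: [::]; [::]; [::]; [::]; [::]; [::]; [::]; [::]; [:: (3,6,6,(Posz 1))]]; [::]; [:: [::]; [::]; [::]; [::]; [::]; [::]; [::]; [::]; [:: (1,6,6,(Negz 0)); (3,6,6,(Negz 0))]]]; [::]; [:: [::]; [::]; [::]; [::]; [:: [::]; [::]; [::]; [::]; [::]; [::]; [::]; [::]; [:: (3,6,8,(Posz 1))]]; [::]; [:: [::]; [::]; [::]; [::]; [::]; [::]; [::]; [::]; [:: (1,6,8,(Negz 0)); (3,6,8,(Negz 0))]]]; [::]; [:: [::]; [::]; [::]; [::]; [:: [::]; [::]; [::]; [::]; [::]; [::]; [::]; [::]; [:: (3,6,10,(Posz 1))]]; [::]; [:: [::]; [::]; [::]; [::]; [::];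 [::]; [::]; [::]; [:: (1,6,10,(Negz 0)); (3,6,10,(Negz 0))]]]]; [::]; [:: [::]; [::]; [::]; [::]; [::]; [::]; [:: [::]; [::]; [::]; [::]; [::]; [::]; [:: [::]; [::]; [::]; [::]; [::]; [::]; [::]; [::]; [::]; [::]; [:: (2,6,6,(Negz 0)); (6,6,6,(Negz 0))]]; [:: [::]; [::]; [::]; [::]; [::]; [::]; [::]; [::]; [::]; [::]; [:: (6,6,6,(Posz 1))]]]; [::]; [:: [::]; [::]; [::]; [::]; [::]; [::]; [:: [::]; [::]; [::]; [::]; [::]; [::]; [::]; [::]; [::]; [::]; [:: (2,6,8,(Negz 0)); (6,6,8,(Negz 0))]]; [:: [::]; [::]; [::]; [::]; [::]; [::]; [::]; [::]; [::]; [::]; [:: (6,6,8,(Posz 1))]]]; [::]; [:: [::]; [::]; [::]; [::]; [::]; [::]; [:: [::]; [::]; [::]; [::]; [::]; [::]; [::]; [::]; [::]; [::]; [:: (2,6,10,(Negz 0)); (6,6,10,(Negz 0))]]; [:: [::]; [::]; [::]; [::]; [::]; [::]; [::]; [::]; [::]; [::]; [:: (6,6,10,(Posz 1))]]]]]; [:: [::]; [::]; [::]; [::]; [::]; [:: [::]; [::]; [::]; [::]; [::]; [:: [::]; [::]; [::]; [::]; [:: [::]; [::]; [::]; [::]; [::]; [:: (3,7,5,(Posz 1))]]; [::]; [::]; [:: [::]; [::]; [::]; [::]; [::]; [:: (0,7,5,(Negz 0)); (3,7,5,(Negz 0))]]]; [::]; [::]; [::]; [:: [::]; [::]; [::]; [::];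 [:: [::]; [::]; [::]; [::]; [::]; [:: (3,7,9,(Posz 1))]]; [::]; [::]; [:: [::]; [::]; [::]; [::]; [::]; [:: (0,7,9,(Negz 0)); (3,7,9,(Negz 0))]]]; [:: [::]; [::]; [::]; [::]; [:: [::]; [::]; [::]; [::]; [::]; [:: (3,7,10,(Posz 1))]]; [::]; [::]; [:: [::]; [::]; [::]; [::]; [::]; [:: (0,7,10,(Negz 0)); (3,7,10,(Negz 0))]]]]; [::]; [::]; [::]; [:: [::]; [::]; [::]; [::]; [::]; [:: [::]; [::]; [::]; [::]; [::]; [:: [::]; [::]; [::]; [::]; [::]; [::]; [::]; [::]; [::]; [:: (4,7,5,(Posz 1))]]; [::]; [:: [::]; [::]; [::]; [::]; [::]; [::]; [::]; [::]; [::]; [:: (1,7,5,(Negz 0)); (4,7,5,(Negz 0))]]]; [::]; [::]; [::]; [:: [::]; [::]; [::]; [::]; [::]; [:: [::]; [::]; [::]; [::]; [::]; [::]; [::]; [::]; [::]; [:: (4,7,9,(Posz 1))]]; [::]; [:: [::]; [::]; [::]; [::]; [::]; [::]; [::]; [::]; [::]; [:: (1,7,9,(Negz 0)); (4,7,9,(Negz 0))]]]; [:: [::]; [::]; [::]; [::]; [::]; [:: [::]; [::]; [::]; [::]; [::]; [::]; [::]; [::]; [::]; [:: (4,7,10,(Posz 1))]]; [::]; [:: [::]; [::]; [::]; [::]; [::]; [::]; [::]; [::]; [::]; [:: (1,7,10,(Negz 0)); (4,7,10,(Negz 0))]]]]; [:: [::]; [::]; [::]; [::]; [::]; [:: [::];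 [::]; [::]; [::]; [::]; [::]; [:: [::]; [::]; [::]; [::]; [::]; [::]; [::]; [::]; [::]; [::]; [:: (5,7,5,(Posz 1))]]; [:: [::]; [::]; [::]; [::]; [::]; [::]; [::]; [::]; [::]; [::]; [:: (2,7,5,(Negz 0)); (5,7,5,(Negz 0))]]]; [::]; [::]; [::]; [:: [::]; [::]; [::]; [::]; [::]; [::]; [:: [::]; [::]; [::]; [::]; [::]; [::]; [::]; [::]; [::]; [::]; [:: (5,7,9,(Posz 1))]]; [:: [::]; [::]; [::]; [::]; [::]; [::]; [::]; [::]; [::]; [::]; [:: (2,7,9,(Negz 0)); (5,7,9,(Negz 0))]]]; [:: [::]; [::]; [::]; [::]; [::]; [::]; [:: [::]; [::]; [::]; [::]; [::]; [::]; [::]; [::]; [::]; [::]; [:: (5,7,10,(Posz 1))]]; [:: [::]; [::]; [::]; [::]; [::]; [::]; [::]; [::]; [::]; [::]; [:: (2,7,10,(Negz 0)); (5,7,10,(Negz 0))]]]]]].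

Open Scope ring_scope.

Definition Ltabs : seq (seq entry) := map (fun t : Eentry => t.2) Etab.
Definition D0f (j : line) (q : point) : seq entry := nth [::] (nth [::] D0arr j) q.
Definition D1f (i : line) (q : point) : seq entry := nth [::] (nth [::] D1arr i) q.
Definition D2f (j : line) (q p2 : point) : seq entry :=
  nth [::] (nth [::] (nth [::] D2arr j) q) p2.
Definition Cf (j : line) (q : point) (k : 'I_7) : seq (nat * int) :=
  nth [::] (nth [::] (nth [::] Carr j) q) k.

Definition c0f (a : Ael) (i : line) (p : point) : int := evl a (lfs (D0f i p)).
Definition c1f (a : Ael) (i : line) (p : point) : int := evl a (lfs (D1f i p)).
Definition c2f (a : Ael) (i : line) (p1 p2 : point) : int := evl a (lfs (D2f i p1 p2)).

Definition Rhs (b : Ael) (j : line) (q : point) (k : 'I_7) : int :=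
  c0f b j q * xcoef j k
  + \sum_(i : line | nat_of_ord i != 0%N) c1f b i q * xcoef i k
  + \sum_(p2 : point | inP0 p2 && inc p2 j) c2f b j q p2 * Scoef p2 k.

Definition Psic (j : line) (q : point) (k : 'I_7) (j' : line) (q' : point) (k' : 'I_7) : int :=
  delta j' q' k' j q k -
  (lk3 (D0f j q) j' q' k' * xcoef j k
   + sumO (fun i : line => nat_of_ord i != 0%N) (fun i => lk3 (D1f i q) j' q' k' * xcoef i k)
   + sumO (fun p2 : point => inP0 p2 && inc p2 j) (fun p2 => lk3 (D2f j q p2) j' q' k' * Scoef p2 k)).

Definition suppq (q : point) (s : seq entry) : bool := all (fun e => e.1.1.2 == nat_of_ord q) s.

Definition checkCk (j : line) (q : point) (k : 'I_7) : bool :=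
  if suppq q (D0f j q) then
  if all (fun i => suppq q (D1f i q)) (ordl 7) then
  if all (fun p2 => suppq q (D2f j q p2)) (ordl 11) then
  if all (fun e => suppq q (nth [::] Ltabs e.1)) (Cf j q k) then
    all (fun j' => all (fun k' =>
      Psic j q k j' q k' == sumS (Cf j q k) (fun e => e.2 * lk3 (nth [::] Ltabs e.1) j' q k'))
      (ordl 6)) (ordl 7)
  else false else false else false else false.
Definition checkCjq (j : line) (q : point) : bool := if inA j q then all (checkCk j q) (ordl 6) else true.
Definition checkC : bool := all (fun j => all (fun q => checkCjq j q) (ordl 11)) (ordl 7).

Lemma sumO_eq0 n (P : pred 'I_n.+1) F : (forall i, F i = 0) -> sumO P F = 0.
Proof. by move=> H; rewrite -big_sumO big1. Qed.

Lemma sumS_in0 (lam : seq (nat * int)) (F : nat * int -> int) :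
  (forall e, e \in lam -> F e = 0) -> sumS lam (fun e => e.2 * F e) = 0.
Proof.
elim: lam => [|e l IH] H //=; rewrite H ?mem_head // mulr0 add0r IH // => e' he'.
by apply: H; rewrite in_cons he' orbT.
Qed.

Lemma checkC_sound : checkC -> forall j q, inA j q -> forall k j' q' k',
  Psic j q k j' q' k' = sumS (Cf j q k) (fun e => e.2 * lk3 (nth [::] Ltabs e.1) j' q' k').
Proof.
move=> h j q hA k j' q' k'.
have h1 : checkCjq j q by apply: (@allO2 7 11 checkCjq h).
have h2 : checkCk j q k by apply: (allP (implyP h1 hA)); apply: mem_ordl.
move: h2; rewrite /checkCk.
case: ifP => [s0|_ ff]; last by exfalso; move: ff.
case: ifP => [/allP s1|_ ff]; last by exfalso; move: ff.
case: ifP => [/allP s2|_ ff]; last by exfalso; move: ff.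
case: ifP => [/allP s3 H|_ ff]; last by exfalso; move: ff.
have [eq|nq] := eqVneq q' q.
  rewrite eq; apply/eqP.
  exact: (@allO2 7 6 (fun j' k' => Psic j q k j' q k' ==
   sumS (Cf j q k) (fun e => e.2 * lk3 (nth [::] Ltabs e.1) j' q k')) H).
have nq' : nat_of_ord q' != nat_of_ord q.
  by apply: contra nq => /eqP e; apply/eqP/val_inj.
rewrite sumS_in0; last first.
  by move=> e /s3 he; rewrite (lk3_out _ _ he nq').
have E1 : sumO (fun i : line => nat_of_ord i != 0%N)
            (fun i => lk3 (D1f i q) j' q' k' * xcoef i k) = 0.
  apply: sumO_eq0 => x; by rewrite (lk3_out _ _ (s1 x (mem_ordl _)) nq') mul0r.
have E2 : sumO (fun p2 : point => inP0 p2 && inc p2 j)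
            (fun p2 => lk3 (D2f j q p2) j' q' k' * Scoef p2 k) = 0.
  apply: sumO_eq0 => x; by rewrite (lk3_out _ _ (s2 x (mem_ordl _)) nq') mul0r.
rewrite /Psic E1 E2 /delta (eq_sym q) (negPf nq) andbF (lk3_out _ _ s0 nq').
by rewrite mul0r !addr0 andFb.
Qed.

Lemma Ltabs_zero a : all checkE Etab -> in_ker_tau a ->
  forall t, evl a (lfs (nth [::] Ltabs t)) = 0.
Proof.
move=> /allP hc hk t; case: (ltnP t (size Ltabs)) => ht.
  have : nth [::] Ltabs t \in Ltabs by apply: mem_nth.
  by rewrite {2}/Ltabs => /mapP[e he ->]; apply: checkE_sound (hc e he) hk.
by rewrite nth_default //; apply: evl0.
Qed.

Lemma sumS_zero (lam : seq (nat * int)) (G : nat -> int) :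
  (forall t, G t = 0) -> sumS lam (fun e => e.2 * G e.1) = 0.
Proof. by move=> H; elim: lam => [|e l IH] //=; rewrite H IH mulr0 add0r. Qed.

Lemma backward a : all checkE Etab -> checkC -> in_ker_tau a -> inU a.
Proof.
move=> hE /checkC_sound hC hk.
exists (c0f a), (c1f a), (c2f a) => j q hA k.
have hq : inP0 q by case/and3P: hA.
rewrite simpl0; last exact: hA.
rewrite simpl1; last exact: hq.
rewrite simpl2; last exact: hA.
apply/eqP; rewrite -subr_eq0; apply/eqP.
pose Phi (b : Ael) := b j q k - Rhs b j q k.
have Hadd : forall b c, Rhs (Aadd b c) j q k = Rhs b j q k + Rhs c j q k.
  move=> b c; rewrite /Rhs /c0f /c1f /c2f evl_add mulrDl.
  rewrite (eq_bigr (fun i => evl b (lfs (D1f i q)) * xcoef i k + evl c (lfs (D1f i q)) * xcoef i k));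
    last by move=> i _; rewrite evl_add mulrDl.
  rewrite (eq_bigr (fun p2 => evl b (lfs (D2f j q p2)) * Scoef p2 k + evl c (lfs (D2f j q p2)) * Scoef p2 k));
    last by move=> p2 _; rewrite evl_add mulrDl.
  rewrite !big_split /=; ring.
have Hsc : forall m b, Rhs (Ascale m b) j q k = m * Rhs b j q k.
  move=> m b; rewrite /Rhs /c0f /c1f /c2f evl_sc.
  rewrite (eq_bigr (fun i => m * (evl b (lfs (D1f i q)) * xcoef i k)));
    last by move=> i _; rewrite evl_sc mulrA.
  rewrite (eq_bigr (fun p2 => m * (evl b (lfs (D2f j q p2)) * Scoef p2 k)));
    last by move=> p2 _; rewrite evl_sc mulrA.
  rewrite -!mulr_sumr; ring.
have -> : a j q k - Rhs a j q k = Phi a by [].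
rewrite (@lin_repr Phi) => [|b c|m b]; last 2 first.
- by rewrite /Phi Hadd /Aadd; ring.
- by rewrite /Phi Hsc /Ascale; ring.
rewrite (@evl_ext a _ (fun j' q' k' => sumS (Cf j q k)
           (fun e => e.2 * lfs (nth [::] Ltabs e.1) j' q' k'))).
  rewrite evl_sumS; apply: (@sumS_zero _ (fun t => evl a (lfs (nth [::] Ltabs t)))) => t.
  exact: Ltabs_zero.
move=> j' q' k'; rewrite -(hC j q hA k j' q' k') /Phi /Psic /Rhs /c0f /c1f /c2f evl_delta.
rewrite -!big_sumO; congr (_ - (_ + _ + _)).
- by apply: eq_bigr => i _; rewrite evl_delta.
- by apply: eq_bigr => p2 _; rewrite evl_delta.
Qed.

Definition G0f (i' : line) (p' : point) (i : line) (p : point) : seq entry :=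
  nth [::] (nth [::] (nth [::] (nth [::] G0arr i') p') i) p.
Definition G1f (i' : line) (p' : point) (i : line) (p : point) : seq entry :=
  nth [::] (nth [::] (nth [::] (nth [::] G1arr i') p') i) p.
Definition G2f (i' : line) (p1 p2 : point) (i : line) (p : point) : seq entry :=
  nth [::] (nth [::] (nth [::] (nth [::] (nth [::] G2arr i') p1) p2) i) p.

Definition allB (f : line -> point -> bool) : bool :=
  all (fun i => all (fun p => if inBc i p then f i p else true) (ordl 11)) (ordl 7).

Lemma allB_sound f : allB f -> forall i p, inB i p -> f i p.
Proof.
move=> h i p hB; have := @allO2 7 11 (fun i p => if inBc i p then f i p else true) h i p.
by rewrite -inBE hB.
Qed.

Definition chk0 (i' : line) (p' : point) : bool :=
  if inA i' p' then allB (fun i p => okG' (a0 i' p') (G0f i' p' i p) i p) else true.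
Definition chk1 (i' : line) (p' : point) : bool :=
  if (nat_of_ord i' != 0%N) && inP0 p' then allB (fun i p => okG' (a1 i' p') (G1f i' p' i p) i p)
  else true.
Definition chk2 (i' : line) (p1 p2 : point) : bool :=
  if [&& nat_of_ord i' != 0%N, inP0 p1 && inc p1 i' & inP0 p2 && inc p2 i'] then
  allB (fun i p => okG' (a2 i' p1 p2) (G2f i' p1 p2 i p) i p) else true.
Definition checkG0 : bool := all (fun i => all (fun p => chk0 i p) (ordl 11)) (ordl 7).
Definition checkG1 : bool := all (fun i => all (fun p => chk1 i p) (ordl 11)) (ordl 7).
Definition checkG2 : bool :=
  all (fun i => all (fun p1 => all (fun p2 => chk2 i p1 p2) (ordl 11)) (ordl 11)) (ordl 7).

Lemma inR3_bigA (i : line) (p : point) (I : Type) (r : seq I) (P : pred I) (F : I -> Ael) :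
  (forall x, P x -> inR3 (tau_val (F x) i p)) ->
  inR3 (tau_val (\big[Aadd/A0]_(x <- r | P x) F x) i p).
Proof.
move=> H; apply: (big_ind (fun g => inR3 (tau_val g i p))) => //.
- by apply: (inR3_ext inR3_0) => w; rewrite tau_vanish.
- by move=> g h hg hh; apply: (inR3_ext (inR3_add hg hh)) => w; rewrite tau_add.
Qed.

Lemma inR3_Asc (i : line) (p : point) m g :
  inR3 (tau_val g i p) -> inR3 (tau_val (Ascale m g) i p).
Proof. by move=> h; apply: (inR3_ext (inR3_scale m h)) => w; rewrite tau_sc. Qed.

Lemma tau_val_ext (a b : Ael) i p : inc p i -> (forall j, inc p j -> a j p = b j p) ->
  tau_val a i p = tau_val b i p.
Proof.
move=> hi H; rewrite /tau_val (H i hi); congr (ncadd _ (br _ _)).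
by apply: functional_extensionality => w; apply: eq_bigr => j hj; rewrite H.
Qed.

Lemma forward a : checkG0 -> checkG1 -> checkG2 -> inU a -> in_ker_tau a.
Proof.
move=> h0 h1 h2 [c0 [c1 [c2 Hc]]] i p hB.
pose B0 := \big[Aadd/A0]_(i' : line) \big[Aadd/A0]_(p' : point | inA i' p')
              Ascale (c0 i' p') (a0 i' p').
pose B1 := \big[Aadd/A0]_(i' : line | nat_of_ord i' != 0%N) \big[Aadd/A0]_(p' : point | inP0 p')
              Ascale (c1 i' p') (a1 i' p').
pose B2 := \big[Aadd/A0]_(i' : line | nat_of_ord i' != 0%N)
             \big[Aadd/A0]_(p1 : point | inP0 p1 && inc p1 i')
             \big[Aadd/A0]_(p2 : point | inP0 p2 && inc p2 i')
              Ascale (c2 i' p1 p2) (a2 i' p1 p2).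
have hBc : inB i p by [].
have /andP[/and3P[_ hp hip] _] := hB.
have hab : forall j, inc p j -> a j p = Aadd (Aadd B0 B1) B2 j p.
  move=> j hj; apply: functional_extensionality => k.
  have hA : inA j p.
    apply/and3P; split; [|exact: hp|exact: hj].
    apply/eqP => ej; move: hp; rewrite /inP0.
    have -> : (ord0 : line) = j by apply: val_inj; rewrite /= ej.
    by rewrite hj.
  rewrite Hc; last exact: hA.
  rewrite /Aadd /B0 /B1 /B2 !bigA_eval.
  congr (_ + _ + _).
  - by apply: eq_bigr => i' _; rewrite bigA_eval.
  - by apply: eq_bigr => i' _; rewrite bigA_eval.
  - apply: eq_bigr => i' _; rewrite bigA_eval; apply: eq_bigr => p1 _.
    by rewrite bigA_eval.
have -> : tau_val a i p = tau_val (Aadd (Aadd B0 B1) B2) i p by apply: tau_val_ext.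
apply: (inR3_ext (inR3_add (inR3_add _ _) _)) => [||| w]; last by rewrite !tau_add.
- apply: inR3_bigA => i' _; apply: inR3_bigA => p' hA; apply: inR3_Asc.
  have hc : chk0 i' p' := @allO2 7 11 chk0 h0 i' p'.
  exact: okG'_sound (allB_sound (implyP hc hA) hBc).
- apply: inR3_bigA => i' hi; apply: inR3_bigA => p' hp'; apply: inR3_Asc.
  have hc : chk1 i' p' := @allO2 7 11 chk1 h1 i' p'.
  exact: okG'_sound (allB_sound (implyP hc (introT andP (conj hi hp'))) hBc).
- apply: inR3_bigA => i' hi; apply: inR3_bigA => p1 h1'; apply: inR3_bigA => p2 h2';
    apply: inR3_Asc.
  have hc : chk2 i' p1 p2 := @allO3 7 11 11 chk2 h2 i' p1 p2.
  exact: okG'_sound (allB_sound (implyP hc (introT and3P (And3 hi h1' h2'))) hBc).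
Qed.


Lemma hE : all checkE Etab. Proof. vm_cast_no_check (erefl true). Qed.
Lemma hC : checkC. Proof. vm_cast_no_check (erefl true). Qed.
Lemma hG0 : checkG0. Proof. vm_cast_no_check (erefl true). Qed.
Lemma hG1 : checkG1. Proof. vm_cast_no_check (erefl true). Qed.
Lemma hG2 : checkG2. Proof. vm_cast_no_check (erefl true). Qed.

Theorem lemma3p3 : forall a : Ael, inU a <-> in_ker_tau a.
Proof.
move=> a; split.
- exact: (forward hG0 hG1 hG2).
- exact: (backward hE hC).
Qed.
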